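(* Assume conditions (C1)–(C6). If $\zeta,\tilde\zeta\in\Theta$ satisfy $\liminf_{k\to\infty}\|\zeta_k-\tilde\zeta_k\|=0$, then the pair $\varphi_\zeta,\varphi_{\tilde\zeta}$ is proximal: for every $\epsilon>0$ and every $E\in\mathbb N$ there exists an integer $k_0$ such that $\|\varphi_\zeta(t)-\varphi_{\tilde\zeta}(t)\|<\epsilon$ for all $t\in[\theta_{2k_0-1},\theta_{2(k_0+E)}]\cap\mathbb T_0$.
   Context: Fix integers $m,n\ge1$ and $r\ge0$. Cells are indexed by pairs $(i,j)$, $1\le i\le m$, $1\le j\le n$. The $r$-neighbourhood of $(i,j)$ is $N_r(i,j)=\{(h,l):1\le h\le m,\ 1\le l\le n,\ \max(|h-i|,|l-j|)\le r\}$. Fix constants $a_{ij}>0$, $C^{hl}_{ij}\ge0$, and a continuous function $f:\mathbb R\to\mathbb R$. Vectors of $\mathbb R^{mn}$ are written $v=\{v_{ij}\}$, with norm $\|v\|=\max_{(i,j)}|v_{ij}|$. Time scale: $\{\theta_k\}_{k\in\mathbb Z}$ is strictly increasing, $\theta_{-1}<0<\theta_0$, and there exist $\omega>0$ and $p\in\mathbb N$ with $\theta_{k+2p}=\theta_k+\omega$ for all $k$. Set $\mathbb T_0=\bigcup_{k\in\mathbb Z}[\theta_{2k-1},\theta_{2k}]$, $\delta_k=\theta_{2k+1}-\theta_{2k}$, $\eta_k=\theta_{2k}-\theta_{2k-1}$ (both $p$-periodic in $k$), $\delta=\max_{1\le k\le p}\delta_k$. On $\mathbb T_0'=\mathbb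 T_0\setminus\{\theta_{2k-1}:k\in\mathbb Z\}$ define $\psi(t)=t-\sum_{0<\theta_{2k}<t}\delta_k$ for $t\ge0$ and $\psi(t)=t+\sum_{t\le\theta_{2k}<0}\delta_k$ for $t<0$; put $s_k=\psi(\theta_{2k})$, so $s_k-s_{k-1}=\eta_k$, and write $\psi(\omega):=\omega-\sum_{k=1}^p\delta_k=\sum_{k=1}^p\eta_k$. Inputs: $\Lambda\subset\mathbb R^{mn}$ is compact and $F:\Lambda\to\Lambda$ is continuous. $\Theta$ is the set of all sequences $\zeta=\{\zeta_k\}_{k\in\mathbb Z}$, $\zeta_k=\{\zeta^{ij}_k\}\in\Lambda$, with $\zeta_{k+1}=F(\zeta_k)$ for all $k\in\mathbb Z$. For $\zeta\in\Theta$, $L_{ij}(t,\zeta)=\zeta^{ij}_k$ for $t\in[\theta_{2k-1},\theta_{2k}]$. Network $(N_\zeta)$ on $\mathbb T_0$: $x^\Delta_{ij}(t)=-a_{ij}x_{ij}(t)-\sum_{(h,l)\in N_r(i,j)}C^{hl}_{ij}f(x_{hl}(t))x_{ij}(t)+L_{ij}(t,\zeta)$, $t\in\mathbb T_0$, where the $\Delta$-derivative at $\theta_{2k}$ is $(x(\theta_{2k+1})-x(\theta_{2k}))/\delta_k$ and elsewhere the ordinary derivative. Concretely, a solution on $\mathbb T_0$ is a function continuous and (one-sidedly at endpoints) differentiable on each $[\theta_{2k-1},\theta_{2k}]$ satisfying there $x_{ij}'=-a_{ij}x_{ij}-\sum_{(h,l)\in N_r(i,j)}C^{hl}_{ij}f(x_{hl})x_{ij}+\zeta^{ij}_k$,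 together with $x_{ij}(\theta_{2k+1})=(1-\delta_ka_{ij})x_{ij}(\theta_{2k})-\delta_k\sum_{(h,l)\in N_r(i,j)}C^{hl}_{ij}f(x_{hl}(\theta_{2k}))x_{ij}(\theta_{2k})+\delta_k\zeta^{ij}_k$. Impulsive system $(I_\zeta)$: for $s\in(s_{k-1},s_k)$, $y_{ij}'(s)=-a_{ij}y_{ij}(s)-\sum_{(h,l)\in N_r(i,j)}C^{hl}_{ij}f(y_{hl}(s))y_{ij}(s)+\zeta^{ij}_k$, and at $s=s_k$, $y_{ij}(s_k+)-y_{ij}(s_k)=-\delta_ka_{ij}y_{ij}(s_k)-\delta_k\sum_{(h,l)\in N_r(i,j)}C^{hl}_{ij}f(y_{hl}(s_k))y_{ij}(s_k)+\delta_k\zeta^{ij}_k$. Solutions are left-continuous, continuous except for discontinuities of the first kind at the $s_k$. Let $u_{ij}(s,\tau)=e^{-a_{ij}(s-\tau)}\prod_{\nu=l}^{k}(1-\delta_\nu a_{ij})$ if $s_{l-1}<\tau\le s_l$, $s_k<s\le s_{k+1}$, $k\ge l$, and $u_{ij}(s,\tau)=e^{-a_{ij}(s-\tau)}$ if $s_k<\tau\le s\le s_{k+1}$. Let $\lambda_{ij}=a_{ij}-\frac1{\psi(\omega)}\sum_{\nu=0}^{p-1}\ln|1-\delta_\nu a_{ij}|$, $\lambda=\min_{(i,j)}\lambda_{ij}$. Conditions: (C1) $\delta_ka_{ij}\ne1$ for all $i,j,k$; (C2) $\lambda>0$; (C3) $\sup_{s\in\mathbb R}|f(s)|\le M_f$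 for some $M_f>0$; (C4) $|f(s_1)-f(s_2)|\le L_f|s_1-s_2|$ for all $s_1,s_2$, for some $L_f>0$. Under (C1),(C2) fix positive numbers $K_{ij}$ with $|u_{ij}(s,\tau)|\le K_{ij}e^{-\lambda_{ij}(s-\tau)}$ for $s\ge\tau$. Define $\bar c=\max_{(i,j)}\big(\frac{K_{ij}}{\lambda_{ij}}+\frac{p\delta K_{ij}}{1-e^{-\lambda_{ij}\psi(\omega)}}\big)\sum_{(h,l)\in N_r(i,j)}C^{hl}_{ij}$, $M_F=\max_{\eta\in\Lambda}\|F(\eta)\|$, $H_0=\frac{M_F}{1-M_f\bar c}\max_{(i,j)}\big(\frac{K_{ij}}{\lambda_{ij}}+\frac{p\delta K_{ij}}{1-e^{-\lambda_{ij}\psi(\omega)}}\big)$, $\bar d=(M_f+H_0L_f)\max_{(i,j)}K_{ij}\sum_{(h,l)\in N_r(i,j)}C^{hl}_{ij}$. (C5) $(M_f+H_0L_f)\bar c<1$. (C6) $-\lambda+\bar d+\frac{p}{\psi(\omega)}\ln(1+\delta\bar d)<0$. Under (C1)–(C5), for $\zeta\in\Theta$ the system $(I_\zeta)$ has a unique solution $\phi_\zeta$ on $\mathbb R$ with $\sup_s\|\phi_\zeta(s)\|\le H_0$; define $\varphi_\zeta:\mathbb T_0\to\mathbb R^{mn}$ by $\varphi_\zeta(t)=\phi_\zeta(\psi(t))$ for $t\in\mathbb T_0'$ and $\varphi_\zeta(\theta_{2k+1})=\phi_\zeta(s_k+)$. Then $\varphi_\zeta$ is the unique solution of $(N_\zeta)$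 on $\mathbb T_0$ with $\sup_{t\in\mathbb T_0}\|\varphi_\zeta(t)\|\le H_0$. *)

(* Defs.v *)
From Stdlib Require Import Reals Lra Lia ZArith List.
Import ListNotations.
Open Scope R_scope.

(* Vectors of R^{mn}: functions on pairs of indices; only the cells
   (i,j) with 1<=i<=m, 1<=j<=n are relevant. *)
Definition vec := nat -> nat -> R.

Definition vsub (u v : vec) : vec := fun i j => u i j - v i j.

Definition cells (m n : nat) : list (nat * nat) :=
  flat_map (fun i => map (fun j => (i, j)) (seq 1 n)) (seq 1 m).

Definition is_cell (m n i j : nat) : Prop :=
  (1 <= i <= m)%nat /\ (1 <= j <= n)%nat.

(* ||v|| = max_{(i,j)} |v_ij| (all terms are >= 0, so starting the fold at 0
   gives the maximum) *)
Definition vnorm (m n : nat) (v : vec) : R :=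
  fold_right Rmax 0 (map (fun c => Rabs (v (fst c) (snd c))) (cells m n)).

(* max / min over all cells of a real quantity g i j (cell (1,1) exists
   since m,n >= 1) *)
Definition cellmax (m n : nat) (g : nat -> nat -> R) : R :=
  fold_right Rmax (g 1%nat 1%nat) (map (fun c => g (fst c) (snd c)) (cells m n)).
Definition cellmin (m n : nat) (g : nat -> nat -> R) : R :=
  fold_right Rmin (g 1%nat 1%nat) (map (fun c => g (fst c) (snd c)) (cells m n)).

(* (h,l) in N_r(i,j) :  max(|h-i|,|l-j|) <= r  (|h-i| = (h-i)+(i-h) in nat) *)
Definition in_nbhd (r i j h l : nat) : bool :=
  Nat.leb ((h - i) + (i - h)) r && Nat.leb ((l - j) + (j - l)) r.

Definition nbsum (m n r i j : nat) (g : nat -> nat -> R) : R :=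
  fold_right Rplus 0
    (map (fun c => if in_nbhd r i j (fst c) (snd c) then g (fst c) (snd c) else 0)
         (cells m n)).

(* integer-indexed finite sums / products: sum_{k=a}^{b} g k (empty if b<a) *)
Definition sumZ (g : Z -> R) (a b : Z) : R :=
  fold_right Rplus 0 (map (fun i => g (a + Z.of_nat i)%Z) (seq 0 (Z.to_nat (b - a + 1)))).
Definition prodZ (g : Z -> R) (a b : Z) : R :=
  fold_right Rmult 1 (map (fun i => g (a + Z.of_nat i)%Z) (seq 0 (Z.to_nat (b - a + 1)))).

Definition delta (theta : Z -> R) (k : Z) : R := theta (2*k+1)%Z - theta (2*k)%Z.
Definition eta (theta : Z -> R) (k : Z) : R := theta (2*k)%Z - theta (2*k-1)%Z.

Definition delta_max (theta : Z -> R) (p : nat) : R :=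
  fold_right Rmax (delta theta 1%Z) (map (fun k => delta theta (Z.of_nat k)) (seq 1 p)).

Definition psi_omega (theta : Z -> R) (omega : R) (p : nat) : R :=
  omega - sumZ (delta theta) 1 (Z.of_nat p).

Definition inT0 (theta : Z -> R) (t : R) : Prop :=
  exists k : Z, theta (2*k-1)%Z <= t <= theta (2*k)%Z.

(* s_k = psi(theta_{2k}).  Since theta_{2j} > 0 iff j >= 0, the definition of
   psi gives psi(theta_{2k}) = theta_{2k} - sum_{j=0}^{k-1} delta_j for k >= 0
   and theta_{2k} + sum_{j=k}^{-1} delta_j for k < 0. *)
Definition s_seq (theta : Z -> R) (k : Z) : R :=
  if (0 <=? k)%Z then theta (2*k)%Z - sumZ (delta theta) 0 (k-1)
  else theta (2*k)%Z + sumZ (delta theta) k (-1).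

Definition lambda_ij (theta : Z -> R) (omega : R) (p : nat) (aij : R) : R :=
  aij - / psi_omega theta omega p *
        sumZ (fun nu => ln (Rabs (1 - delta theta nu * aij))) 0 (Z.of_nat p - 1).

Definition lambda_min (m n : nat) (theta : Z -> R) (omega : R) (p : nat)
  (a : nat -> nat -> R) : R :=
  cellmin m n (fun i j => lambda_ij theta omega p (a i j)).

(* Bound |u_ij(s,tau)| <= K_ij e^{-lambda_ij (s - tau)} for s >= tau, where
   u_ij(s,tau) = e^{-a_ij(s-tau)} prod_{nu=l}^{k} (1 - delta_nu a_ij) when
   s_{l-1} < tau <= s_l, s_k < s <= s_{k+1}  (k >= l; the case k = l-1, i.e.
   tau and s in the same interval, is the empty product). *)
Definition u_bound (theta : Z -> R) (omega : R) (p : nat) (aij Kij : R) : Prop :=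
  forall (l k : Z) (tau s : R),
    s_seq theta (l - 1) < tau <= s_seq theta l ->
    s_seq theta k < s <= s_seq theta (k + 1) ->
    tau <= s ->
    Rabs (exp (- aij * (s - tau)) * prodZ (fun nu => 1 - delta theta nu * aij) l k)
      <= Kij * exp (- lambda_ij theta omega p aij * (s - tau)).

Definition coefK (theta : Z -> R) (omega : R) (p : nat) (aij Kij : R) : R :=
  Kij / lambda_ij theta omega p aij
  + INR p * delta_max theta p * Kij
      / (1 - exp (- lambda_ij theta omega p aij * psi_omega theta omega p)).

Definition cbar (m n r : nat) (theta : Z -> R) (omega : R) (p : nat)
  (a K : nat -> nat -> R) (C : nat -> nat -> nat -> nat -> R) : R :=
  cellmax m n (fun i j => coefK theta omega p (a i j) (K i j) * nbsum m n r i j (C i j)).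

Definition H0 (m n r : nat) (theta : Z -> R) (omega : R) (p : nat)
  (a K : nat -> nat -> R) (C : nat -> nat -> nat -> nat -> R) (MF Mf : R) : R :=
  MF / (1 - Mf * cbar m n r theta omega p a K C)
  * cellmax m n (fun i j => coefK theta omega p (a i j) (K i j)).

Definition dbar (m n r : nat) (theta : Z -> R) (omega : R) (p : nat)
  (a K : nat -> nat -> R) (C : nat -> nat -> nat -> nat -> R) (MF Mf Lf : R) : R :=
  (Mf + H0 m n r theta omega p a K C MF Mf * Lf)
  * cellmax m n (fun i j => K i j * nbsum m n r i j (C i j)).

Definition seq_compact (m n : nat) (Lam : vec -> Prop) : Prop :=
  forall u : nat -> vec, (forall k, Lam (u k)) ->
  exists (phi : nat -> nat) (v : vec),
    (forall k, (phi k < phi (S k))%nat) /\ Lam v /\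
    forall eps, eps > 0 -> exists N : nat, forall k, (N <= k)%nat ->
      vnorm m n (vsub (u (phi k)) v) < eps.

Definition cont_on (m n : nat) (Lam : vec -> Prop) (F : vec -> vec) : Prop :=
  forall eta0, Lam eta0 -> forall eps, eps > 0 -> exists d, d > 0 /\
    forall eta1, Lam eta1 -> vnorm m n (vsub eta1 eta0) < d ->
      vnorm m n (vsub (F eta1) (F eta0)) < eps.

Definition in_Theta (Lam : vec -> Prop) (F : vec -> vec) (zeta : Z -> vec) : Prop :=
  forall k : Z, Lam (zeta k) /\ zeta (k + 1)%Z = F (zeta k).

Definition liminf_eq (a : nat -> R) (L : R) : Prop :=
  forall eps, eps > 0 ->
    (exists N : nat, forall k, (N <= k)%nat -> L - eps < a k) /\
    (forall N : nat, exists k, (N <= k)%nat /\ a k < L + eps).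

Definition deriv_within (g : R -> R) (lo hi t D : R) : Prop :=
  forall eps, eps > 0 -> exists d, d > 0 /\
    forall h, h <> 0 -> Rabs h < d -> lo <= t + h <= hi ->
      Rabs ((g (t + h) - g t) / h - D) < eps.

Definition is_sol_N (m n r : nat) (a : nat -> nat -> R)
  (C : nat -> nat -> nat -> nat -> R) (f : R -> R) (theta : Z -> R)
  (zeta : Z -> vec) (x : R -> vec) : Prop :=
  forall (k : Z) (i j : nat), is_cell m n i j ->
    (forall t, theta (2*k-1)%Z <= t <= theta (2*k)%Z ->
       deriv_within (fun u => x u i j) (theta (2*k-1)%Z) (theta (2*k)%Z) t
         (- a i j * x t i j
          - nbsum m n r i j (fun h l => C i j h l * f (x t h l)) * x t i j
          + zeta k i j)) /\
    x (theta (2*k+1)%Z) i j =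
      (1 - delta theta k * a i j) * x (theta (2*k)%Z) i j
      - delta theta k * nbsum m n r i j
          (fun h l => C i j h l * f (x (theta (2*k)%Z) h l)) * x (theta (2*k)%Z) i j
      + delta theta k * zeta k i j.

(* Main.v *)
Require Import Defs.
From Stdlib Require Import Reals Lra Lia ZArith List Classical ClassicalEpsilon.
Open Scope R_scope.


Definition cl (al be s : R) := Rmax al (Rmin be s).

Lemma cl_in al be s : al <= be -> al <= cl al be s <= be.
Proof. intros; unfold cl, Rmax, Rmin; repeat destruct Rle_dec; lra. Qed.
Lemma cl_id al be s : al <= s <= be -> cl al be s = s.
Proof. intros; unfold cl, Rmax, Rmin; repeat destruct Rle_dec; lra. Qed.
Lemma cl_lip al be s t : al <= be -> al <= t <= be -> Rabs (cl al be s - t) <= Rabs (s - t).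
Proof. intros; unfold cl, Rmax, Rmin; repeat destruct Rle_dec; unfold Rabs; repeat destruct Rcase_abs; lra. Qed.

Lemma dw_interior g al be tau D :
  deriv_within g al be tau D -> al < tau < be ->
  derivable_pt_lim (fun s => g (cl al be s)) tau D.
Proof.
  intros Hd Ht eps Heps.
  destruct (Hd eps Heps) as [d [Hdp Hdd]].
  assert (Hm : 0 < Rmin d (Rmin (tau - al) (be - tau))).
  { repeat apply Rmin_pos; lra. }
  exists (mkposreal _ Hm). intros h Hh0 Hh. simpl in Hh.
  assert (Hh1 : Rabs h < d) by (eapply Rlt_le_trans; [exact Hh| apply Rmin_l]).
  assert (Hh2 : Rabs h < Rmin (tau - al) (be - tau)) by (eapply Rlt_le_trans; [exact Hh| apply Rmin_r]).
  assert (Hh3 : Rabs h < tau - al) by (eapply Rlt_le_trans; [exact Hh2| apply Rmin_l]).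
  assert (Hh4 : Rabs h < be - tau) by (eapply Rlt_le_trans; [exact Hh2| apply Rmin_r]).
  assert (Hr : al <= tau + h <= be) by (unfold Rabs in *; destruct Rcase_abs; lra).
  rewrite (cl_id al be (tau+h)) by lra. rewrite (cl_id al be tau) by lra.
  apply Hdd; auto.
Qed.

Lemma dw_cont g al be tau D :
  al <= be -> al <= tau <= be -> deriv_within g al be tau D ->
  continuity_pt (fun s => g (cl al be s)) tau.
Proof.
  intros Hab Ht Hd. unfold continuity_pt, continue_in, limit1_in, limit_in; simpl; unfold R_dist.
  intros eps Heps.
  destruct (Hd 1 Rlt_0_1) as [d [Hdp Hdd]].
  assert (Hm : 0 < Rmin d (eps / (Rabs D + 1))).
  { apply Rmin_pos; auto. apply Rdiv_lt_0_compat; auto. pose proof (Rabs_pos D); lra. }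
  exists (Rmin d (eps / (Rabs D + 1))). split; auto.
  intros x [_ Hx].
  rewrite (cl_id al be tau) by lra.
  set (h := cl al be x - tau).
  assert (Hh : Rabs h <= Rabs (x - tau)) by (apply cl_lip; lra).
  assert (Hin : al <= tau + h <= be) by (unfold h; pose proof (cl_in al be x Hab); lra).
  replace (cl al be x) with (tau + h) by (unfold h; ring).
  destruct (Req_dec h 0) as [H0|H0].
  { rewrite H0, Rplus_0_r, Rminus_diag, Rabs_R0; auto. }
  assert (Hh1 : Rabs h < d).
  { eapply Rle_lt_trans; [exact Hh|]. eapply Rlt_le_trans; [exact Hx| apply Rmin_l]. }
  assert (Hh2 : Rabs h < eps / (Rabs D + 1)).
  { eapply Rle_lt_trans; [exact Hh|]. eapply Rlt_le_trans; [exact Hx| apply Rmin_r]. }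
  specialize (Hdd h H0 Hh1 Hin).
  set (q := (g (tau + h) - g tau) / h) in *.
  assert (Heq : g (tau + h) - g tau = q * h) by (unfold q; field; auto).
  rewrite Heq, Rabs_mult.
  assert (Hq : Rabs q <= Rabs D + 1).
  { replace q with ((q - D) + D) by ring. eapply Rle_trans; [apply Rabs_triang|]. lra. }
  assert (HD : 0 < Rabs D + 1) by (pose proof (Rabs_pos D); lra).
  apply (Rmult_lt_compat_r (Rabs D + 1)) in Hh2; auto.
  replace (eps / (Rabs D + 1) * (Rabs D + 1)) with eps in Hh2 by (field; lra).
  eapply Rle_lt_trans; [| exact Hh2]. rewrite Rmult_comm.
  apply Rmult_le_compat_l; auto. apply Rabs_pos.
Qed.


Lemma mvt_le f f' a b : a < b ->
  (forall c, a < c < b -> derivable_pt_lim f c (f' c)) ->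
  (forall c, a <= c <= b -> continuity_pt f c) ->
  (forall c, a < c < b -> f' c <= 0) -> f b <= f a.
Proof.
  intros Hab Hd Hc Hn.
  assert (pr1 : forall c, a < c < b -> derivable_pt f c).
  { intros c Hc'. exists (f' c). apply Hd; auto. }
  assert (pr2 : forall c, a < c < b -> derivable_pt id c).
  { intros c _. apply derivable_pt_id. }
  destruct (MVT f id a b pr1 pr2 Hab Hc) as [c [P HP]].
  { intros; apply derivable_continuous_pt, derivable_pt_id. }
  rewrite (derive_pt_eq_0 f c (f' c) (pr1 c P) (Hd c P)) in HP.
  rewrite (derive_pt_eq_0 id c 1 (pr2 c P) (derivable_pt_lim_id c)) in HP.
  unfold id in HP. specialize (Hn c P).
  assert ((b - a) * f' c <= 0).
  { assert (0 <= b - a) by lra. assert (0 <= -f' c) by lra. pose proof (Rmult_le_pos _ _ H H0). lra. }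
  lra.
Qed.

Lemma mv_main (w w' g1 g2 D1 D2 G G' : R -> R) al be t :
  al < be -> al <= t <= be ->
  (forall s, derivable_pt_lim w s (w' s)) ->
  (forall s, derivable_pt_lim G s (G' s)) ->
  (forall s, al <= s <= be -> deriv_within g1 al be s (D1 s)) ->
  (forall s, al <= s <= be -> deriv_within g2 al be s (D2 s)) ->
  (forall s, al < s < t -> Rabs (w' s * (g1 s - g2 s) + w s * (D1 s - D2 s)) <= G' s) ->
  Rabs (w t * (g1 t - g2 t) - w al * (g1 al - g2 al)) <= G t - G al.
Proof.
  intros Hab Ht Hw HG H1 H2 Hb.
  destruct (Req_dec t al) as [E|E].
  { subst t. rewrite Rminus_diag, Rabs_R0. lra. }
  assert (Hal : al < t) by lra.
  set (h := fun s => w s * (g1 (cl al be s) - g2 (cl al be s))).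
  assert (Hhd : forall c, al < c < be -> derivable_pt_lim h c
      (w' c * (g1 c - g2 c) + w c * (D1 c - D2 c))).
  { intros c Hc.
    pose proof (dw_interior _ _ _ _ _ (H1 c ltac:(lra)) Hc) as d1.
    pose proof (dw_interior _ _ _ _ _ (H2 c ltac:(lra)) Hc) as d2.
    pose proof (derivable_pt_lim_minus _ _ _ _ _ d1 d2) as d3.
    pose proof (derivable_pt_lim_mult _ _ _ _ _ (Hw c) d3) as d4.
    unfold h. unfold mult_fct, minus_fct in d4.
    rewrite (cl_id al be c) in d4 by lra. exact d4. }
  assert (Hhc : forall c, al <= c <= be -> continuity_pt h c).
  { intros c Hc. unfold h. apply continuity_pt_mult.
    - apply derivable_continuous_pt. exists (w' c). apply Hw.
    - apply continuity_pt_minus.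
      + eapply dw_cont; [lra| exact Hc| apply H1; auto].
      + eapply dw_cont; [lra| exact Hc| apply H2; auto]. }
  assert (HGc : forall c, continuity_pt G c).
  { intros c. apply derivable_continuous_pt. exists (G' c). apply HG. }
  assert (Hht : h t = w t * (g1 t - g2 t)) by (unfold h; rewrite cl_id by lra; auto).
  assert (Hha : h al = w al * (g1 al - g2 al)) by (unfold h; rewrite cl_id by lra; auto).
  assert (A1 : h t - G t <= h al - G al).
  { apply (mvt_le (fun s => h s - G s) (fun c => (w' c * (g1 c - g2 c) + w c * (D1 c - D2 c)) - G' c) al t Hal).
    - intros c Hc. apply derivable_pt_lim_minus; [apply Hhd; lra| apply HG].
    - intros c Hc. apply continuity_pt_minus; [apply Hhc; lra| apply HGc].
    - intros c Hc. specialize (Hb c Hc). pose proof (Rle_abs (w' c * (g1 c - g2 c) + w c * (D1 c - D2 c))). lra. }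
  assert (A2 : - h t - G t <= - h al - G al).
  { apply (mvt_le (fun s => - h s - G s) (fun c => - (w' c * (g1 c - g2 c) + w c * (D1 c - D2 c)) - G' c) al t Hal).
    - intros c Hc. apply derivable_pt_lim_minus; [apply derivable_pt_lim_opp; apply Hhd; lra| apply HG].
    - intros c Hc. apply continuity_pt_minus; [apply continuity_pt_opp, Hhc; lra| apply HGc].
    - intros c Hc. specialize (Hb c Hc). pose proof (Rle_abs (-(w' c * (g1 c - g2 c) + w c * (D1 c - D2 c)))). rewrite Rabs_Ropp in H. lra. }
  rewrite <- Hht, <- Hha. unfold Rabs; destruct Rcase_abs; lra.
Qed.


Fixpoint sumn (g : nat -> R) (k : nat) : R :=
  match k with O => 0 | S k' => sumn g k' + g k' end.
Fixpoint prodn (g : nat -> R) (k : nat) : R :=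
  match k with O => 1 | S k' => prodn g k' * g k' end.

Lemma fold_plus_c l c : fold_right Rplus c l = fold_right Rplus 0 l + c.
Proof. induction l; simpl; [ring| rewrite IHl; ring]. Qed.
Lemma fold_mult_c l c : fold_right Rmult c l = fold_right Rmult 1 l * c.
Proof. induction l; simpl; [ring| rewrite IHl; ring]. Qed.

Lemma fold_sumn h N : fold_right Rplus 0 (map h (seq 0 N)) = sumn h N.
Proof.
  induction N; [reflexivity|].
  rewrite seq_S, map_app, fold_right_app. simpl. rewrite fold_plus_c, IHN. ring.
Qed.
Lemma fold_prodn h N : fold_right Rmult 1 (map h (seq 0 N)) = prodn h N.
Proof.
  induction N; [reflexivity|].
  rewrite seq_S, map_app, fold_right_app. simpl. rewrite fold_mult_c, IHN. ring.
Qed.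

Lemma sumZ_sumn g a b : sumZ g a b = sumn (fun i => g (a + Z.of_nat i)%Z) (Z.to_nat (b - a + 1)).
Proof. unfold sumZ. apply fold_sumn. Qed.
Lemma prodZ_prodn g a b : prodZ g a b = prodn (fun i => g (a + Z.of_nat i)%Z) (Z.to_nat (b - a + 1)).
Proof. unfold prodZ. apply fold_prodn. Qed.

Lemma sumn_ext g h k : (forall i, (i < k)%nat -> g i = h i) -> sumn g k = sumn h k.
Proof. induction k; simpl; intros; auto. rewrite IHk by (intros; apply H; lia). rewrite H by lia; auto. Qed.
Lemma prodn_ext g h k : (forall i, (i < k)%nat -> g i = h i) -> prodn g k = prodn h k.
Proof. induction k; simpl; intros; auto. rewrite IHk by (intros; apply H; lia). rewrite H by lia; auto. Qed.

Lemma sumn_shift g k : sumn g (S k) = g O + sumn (fun i => g (S i)) k.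
Proof. induction k; simpl in *; [ring|]. rewrite IHk. ring. Qed.
Lemma prodn_shift g k : prodn g (S k) = g O * prodn (fun i => g (S i)) k.
Proof. induction k; simpl in *; [ring|]. rewrite IHk. ring. Qed.

Lemma sumn_le g h k : (forall i, (i < k)%nat -> g i <= h i) -> sumn g k <= sumn h k.
Proof. induction k; simpl; intros; [lra|]. pose proof (H k (Nat.lt_succ_diag_r k)). assert (sumn g k <= sumn h k) by (apply IHk; intros; apply H; lia). lra. Qed.
Lemma sumn_nonneg g k : (forall i, (i < k)%nat -> 0 <= g i) -> 0 <= sumn g k.
Proof. induction k; simpl; intros; [lra|]. pose proof (H k (Nat.lt_succ_diag_r k)). assert (0 <= sumn g k) by (apply IHk; intros; apply H; lia). lra. Qed.
Lemma sumn_mono g k1 k2 : (k1 <= k2)%nat -> (forall i, 0 <= g i) -> sumn g k1 <= sumn g k2.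
Proof. intros H Hg. induction H; [lra| simpl; pose proof (Hg m); lra]. Qed.
Lemma sumn_add g k1 k2 : sumn g (k1 + k2) = sumn g k1 + sumn (fun i => g (k1 + i)%nat) k2.
Proof. induction k2; simpl; [rewrite Nat.add_0_r; ring|]. rewrite Nat.add_succ_r. simpl. rewrite IHk2. ring. Qed.
Lemma sumn_rev g k : sumn (fun i => g (k - 1 - i)%nat) k = sumn g k.
Proof.
  induction k; auto. rewrite sumn_shift. simpl sumn at 2.
  replace (S k - 1 - 0)%nat with k by lia. rewrite <- IHk.
  rewrite (sumn_ext (fun i => g (S k - 1 - S i)%nat) (fun i => g (k - 1 - i)%nat)) by (intros; f_equal; lia). ring.
Qed.
Lemma sumn_scal c g k : sumn (fun i => c * g i) k = c * sumn g k.
Proof. induction k; simpl; [ring| rewrite IHk; ring]. Qed.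
Lemma sumn_const c k : sumn (fun _ => c) k = INR k * c.
Proof. induction k; simpl sumn; [simpl; ring| rewrite IHk, S_INR; ring]. Qed.

Lemma in_cells m n i j : In (i, j) (cells m n) <-> is_cell m n i j.
Proof.
  unfold cells, is_cell. rewrite in_flat_map. split.
  - intros [i' [Hi Hj]]. apply in_map_iff in Hj. destruct Hj as [j' [E Hj]]. inversion E; subst.
    apply in_seq in Hi. apply in_seq in Hj. lia.
  - intros [Hi Hj]. exists i. split; [apply in_seq; lia|]. apply in_map_iff. exists j. split; auto. apply in_seq; lia.
Qed.
Lemma in_cells' m n c : In c (cells m n) -> is_cell m n (fst c) (snd c).
Proof. destruct c; simpl. apply in_cells. Qed.

Lemma fold_max_ge x c l : In x l -> x <= fold_right Rmax c l.
Proof. induction l; simpl; intros H; [tauto|]. destruct H; [subst; apply Rmax_l|]. eapply Rle_trans; [apply IHl; auto| apply Rmax_r]. Qed.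
Lemma fold_max_c c l : c <= fold_right Rmax c l.
Proof. induction l; simpl; [lra|]. eapply Rle_trans; [apply IHl| apply Rmax_r]. Qed.
Lemma fold_max_le M c l : c <= M -> (forall x, In x l -> x <= M) -> fold_right Rmax c l <= M.
Proof. induction l; simpl; intros; auto. apply Rmax_lub; auto. Qed.
Lemma fold_min_le x c l : In x l -> fold_right Rmin c l <= x.
Proof. induction l; simpl; intros H; [tauto|]. destruct H; [subst; apply Rmin_l|]. eapply Rle_trans; [apply Rmin_r| apply IHl; auto]. Qed.

Lemma vnorm_ge m n v i j : is_cell m n i j -> Rabs (v i j) <= vnorm m n v.
Proof.
  intros H. unfold vnorm. apply fold_max_ge. apply in_map_iff. exists (i, j). split; auto. apply in_cells; auto.
Qed.
Lemma vnorm_pos m n v : 0 <= vnorm m n v.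
Proof. unfold vnorm. apply fold_max_c. Qed.
Lemma vnorm_le m n v M : 0 <= M -> (forall i j, is_cell m n i j -> Rabs (v i j) <= M) -> vnorm m n v <= M.
Proof.
  intros H0 H. unfold vnorm. apply fold_max_le; auto. intros x Hx. apply in_map_iff in Hx.
  destruct Hx as [c [E Hc]]. subst. apply H. apply in_cells'; auto.
Qed.
Lemma cellmax_ge m n g i j : is_cell m n i j -> g i j <= cellmax m n g.
Proof. intros H. unfold cellmax. apply fold_max_ge. apply in_map_iff. exists (i, j). split; auto. apply in_cells; auto. Qed.
Lemma cellmin_le m n g i j : is_cell m n i j -> cellmin m n g <= g i j.
Proof. intros H. unfold cellmin. apply fold_min_le. apply in_map_iff. exists (i, j). split; auto. apply in_cells; auto. Qed.

Lemma vnorm_triang m n u v w : vnorm m n (vsub u w) <= vnorm m n (vsub u v) + vnorm m n (vsub v w).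
Proof.
  apply vnorm_le. { pose proof (vnorm_pos m n (vsub u v)); pose proof (vnorm_pos m n (vsub v w)); lra. }
  intros i j H. unfold vsub. replace (u i j - w i j) with ((u i j - v i j) + (v i j - w i j)) by ring.
  eapply Rle_trans; [apply Rabs_triang|]. apply Rplus_le_compat; apply (vnorm_ge m n (vsub _ _) i j H).
Qed.
Lemma vnorm_sym m n u v : vnorm m n (vsub u v) = vnorm m n (vsub v u).
Proof.
  apply Rle_antisym; apply vnorm_le; try apply vnorm_pos; intros i j H; unfold vsub;
  rewrite Rabs_minus_sym; apply (vnorm_ge m n (vsub _ _) i j H).
Qed.
Lemma vnorm_sub_le m n u v : vnorm m n (vsub u v) <= vnorm m n u + vnorm m n v.
Proof.
  apply vnorm_le. { pose proof (vnorm_pos m n u); pose proof (vnorm_pos m n v); lra. }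
  intros i j H. unfold vsub.
  unfold Rminus. eapply Rle_trans; [apply Rabs_triang|]. rewrite Rabs_Ropp.
  apply Rplus_le_compat; apply vnorm_ge; auto.
Qed.

Lemma nb_list_bound (L : list (nat * nat)) (P : nat -> nat -> bool) (Cw F1 F2 : nat -> nat -> R) M :
  (forall c, In c L -> 0 <= Cw (fst c) (snd c) /\ Rabs (F1 (fst c) (snd c) - F2 (fst c) (snd c)) <= M) ->
  Rabs (fold_right Rplus 0 (map (fun c => if P (fst c) (snd c) then Cw (fst c) (snd c) * F1 (fst c) (snd c) else 0) L)
      - fold_right Rplus 0 (map (fun c => if P (fst c) (snd c) then Cw (fst c) (snd c) * F2 (fst c) (snd c) else 0) L))
  <= M * fold_right Rplus 0 (map (fun c => if P (fst c) (snd c) then Cw (fst c) (snd c) else 0) L).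
Proof.
  induction L as [|c L IH]; simpl; intros H.
  { rewrite Rminus_diag, Rabs_R0. lra. }
  destruct (H c (or_introl eq_refl)) as [Hc HM].
  assert (IH' := IH (fun c0 Hc0 => H c0 (or_intror Hc0))).
  destruct (P (fst c) (snd c)).
  - match goal with |- Rabs (?A + ?B - (?C + ?D)) <= _ => replace (A + B - (C + D)) with ((A - C) + (B - D)) by ring end.
    eapply Rle_trans; [apply Rabs_triang|]. rewrite Rmult_plus_distr_l.
    apply Rplus_le_compat; auto.
    rewrite <- Rmult_minus_distr_l, Rabs_mult, Rabs_pos_eq by auto. rewrite Rmult_comm. apply Rmult_le_compat_r; auto.
  - rewrite !Rplus_0_l. exact IH'.
Qed.

Lemma nbsum_bound m n r i j (Cw F1 F2 : nat -> nat -> R) M :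
  (forall h l, is_cell m n h l -> 0 <= Cw h l /\ Rabs (F1 h l - F2 h l) <= M) ->
  Rabs (nbsum m n r i j (fun h l => Cw h l * F1 h l) - nbsum m n r i j (fun h l => Cw h l * F2 h l))
  <= M * nbsum m n r i j Cw.
Proof.
  intros H. unfold nbsum. apply (nb_list_bound _ (in_nbhd r i j)). intros c Hc. apply H. apply in_cells'; auto.
Qed.

Lemma nbsum_nonneg m n r i j (Cw : nat -> nat -> R) :
  (forall h l, is_cell m n h l -> 0 <= Cw h l) -> 0 <= nbsum m n r i j Cw.
Proof.
  intros H. unfold nbsum. assert (Hc : forall c, In c (cells m n) -> 0 <= Cw (fst c) (snd c)) by (intros; apply H; apply in_cells'; auto).
  induction (cells m n) as [|c0 l IHl]; simpl; [lra|]. destruct in_nbhd.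
  - pose proof (Hc c0 (or_introl eq_refl)). pose proof (IHl (fun c H' => Hc c (or_intror H'))). lra.
  - rewrite Rplus_0_l. apply IHl. intros; apply Hc; right; auto.
Qed.


Lemma sumn_S g k : sumn g (S k) = sumn g k + g k.
Proof. reflexivity. Qed.

Lemma delta_pos theta (Hmono : forall k : Z, theta k < theta (k + 1)%Z) k : 0 < delta theta k.
Proof. unfold delta. pose proof (Hmono (2*k)%Z). lra. Qed.
Lemma eta_pos theta (Hmono : forall k : Z, theta k < theta (k + 1)%Z) k : 0 < eta theta k.
Proof. unfold eta. pose proof (Hmono (2*k-1)%Z). replace (2*k-1+1)%Z with (2*k)%Z in H by ring. lra. Qed.

Lemma sq_step theta l : s_seq theta l - s_seq theta (l - 1) = theta (2*l)%Z - theta (2*l-1)%Z.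
Proof.
  unfold s_seq. rewrite !sumZ_sumn.
  destruct (Z.leb_spec 0 (l-1)) as [H1|H1].
  - assert (H0 : (0 <= l)%Z) by lia. apply Z.leb_le in H0. rewrite H0.
    set (N := Z.to_nat (l - 1)).
    assert (El : l = (Z.of_nat N + 1)%Z) by (unfold N; lia). clearbody N. subst l.
    replace (Z.of_nat N + 1 - 1 - 0 + 1)%Z with (Z.of_nat (S N)) by lia.
    replace (Z.of_nat N + 1 - 1 - 1 - 0 + 1)%Z with (Z.of_nat N) by lia.
    rewrite !Nat2Z.id. simpl sumn.
    replace (Z.of_nat N + 1 - 1)%Z with (Z.of_nat N) by ring.
    replace (0 + Z.of_nat N)%Z with (Z.of_nat N) by ring.
    unfold delta. replace (2 * Z.of_nat N + 1)%Z with (2*(Z.of_nat N + 1)-1)%Z by ring. ring.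
  - destruct (Z.leb_spec 0 l) as [H2|H2].
    + assert (l = 0)%Z by lia. subst l. simpl.
      unfold delta. simpl. ring.
    + replace (-1 - l + 1)%Z with (- l)%Z by ring.
      replace (-1 - (l - 1) + 1)%Z with (Z.of_nat (S (Z.to_nat (- l)))) by lia.
      rewrite Nat2Z.id. rewrite sumn_shift.
      rewrite (sumn_ext (fun i => delta theta (l - 1 + Z.of_nat (S i))) (fun i => delta theta (l + Z.of_nat i))).
      2:{ intros; f_equal; lia. }
      replace (l - 1 + Z.of_nat 0)%Z with (l-1)%Z by lia.
      unfold delta. replace (2 * (l - 1) + 1)%Z with (2*l-1)%Z by ring.
      replace (2 * (l - 1))%Z with (2*l-2)%Z by ring. ring.
Qed.

Lemma p_pos theta omega p (Homega : 0 < omega)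
  (Hper : forall k : Z, theta (k + 2 * Z.of_nat p)%Z = theta k + omega) : (1 <= p)%nat.
Proof. destruct p; [|lia]. specialize (Hper 0%Z). simpl in Hper. lra. Qed.

Lemma delta_per theta omega p
  (Hper : forall k : Z, theta (k + 2 * Z.of_nat p)%Z = theta k + omega) k :
  delta theta (k + Z.of_nat p) = delta theta k.
Proof.
  unfold delta. replace (2 * (k + Z.of_nat p) + 1)%Z with (2*k+1 + 2 * Z.of_nat p)%Z by ring.
  replace (2 * (k + Z.of_nat p))%Z with (2*k + 2 * Z.of_nat p)%Z by ring. rewrite !Hper. ring.
Qed.
Lemma eta_per theta omega p
  (Hper : forall k : Z, theta (k + 2 * Z.of_nat p)%Z = theta k + omega) k :
  eta theta (k + Z.of_nat p) = eta theta k.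
Proof.
  unfold eta. replace (2 * (k + Z.of_nat p) - 1)%Z with (2*k-1 + 2 * Z.of_nat p)%Z by ring.
  replace (2 * (k + Z.of_nat p))%Z with (2*k + 2 * Z.of_nat p)%Z by ring. rewrite !Hper. ring.
Qed.

Lemma sq_add theta l N :
  s_seq theta (l + Z.of_nat N) = s_seq theta l + sumn (fun i => eta theta (l + 1 + Z.of_nat i)) N.
Proof.
  induction N.
  - simpl. rewrite Z.add_0_r. ring.
  - simpl sumn. rewrite <- Rplus_assoc, <- IHN.
    pose proof (sq_step theta (l + Z.of_nat (S N))) as H.
    replace (l + Z.of_nat (S N) - 1)%Z with (l + Z.of_nat N)%Z in H by lia.
    unfold eta. replace (l + 1 + Z.of_nat N)%Z with (l + Z.of_nat (S N))%Z by lia. lra.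
Qed.

Lemma Z_ind_shift (T : Z -> R) : (forall l, T (l + 1)%Z = T l) -> forall l, T l = T 0%Z.
Proof.
  intros H l. destruct (Z.leb_spec 0 l).
  - replace l with (Z.of_nat (Z.to_nat l)) by lia. induction (Z.to_nat l); auto.
    rewrite Nat2Z.inj_succ, <- Z.add_1_r, H. auto.
  - replace l with (- Z.of_nat (Z.to_nat (-l)))%Z by lia. induction (Z.to_nat (-l)); auto.
    rewrite Nat2Z.inj_succ. rewrite <- IHn. rewrite <- H. f_equal. lia.
Qed.

Lemma eta_sum_const theta omega p (Homega : 0 < omega)
  (Hper : forall k : Z, theta (k + 2 * Z.of_nat p)%Z = theta k + omega) l :
  sumn (fun i => eta theta (l + Z.of_nat i)) p = psi_omega theta omega p.
Proof.
  pose proof (p_pos _ _ _ Homega Hper) as Hp.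
  set (T := fun l => sumn (fun i => eta theta (l + Z.of_nat i)) p).
  assert (HT : forall l, T (l + 1)%Z = T l).
  { intros l0. unfold T. destruct p as [|p']; [lia|].
    rewrite (sumn_shift (fun i => eta theta (l0 + Z.of_nat i)) p').
    rewrite (sumn_S (fun i => eta theta (l0 + 1 + Z.of_nat i))).
    rewrite (sumn_ext (fun i => eta theta (l0 + Z.of_nat (S i))) (fun i => eta theta (l0 + 1 + Z.of_nat i))) by (intros; f_equal; lia).
    replace (l0 + 1 + Z.of_nat p')%Z with (l0 + Z.of_nat (S p'))%Z by lia.
    rewrite (eta_per theta omega (S p') Hper). rewrite Z.add_0_r. ring. }
  change (T l = psi_omega theta omega p). rewrite (Z_ind_shift T HT l).
  rewrite <- (HT 0%Z). unfold T, psi_omega. rewrite sumZ_sumn.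
  replace (Z.of_nat p - 1 + 1)%Z with (Z.of_nat p) by ring. rewrite Nat2Z.id.
  assert (forall N, sumn (fun i => eta theta (0 + 1 + Z.of_nat i)) N + sumn (fun i => delta theta (1 + Z.of_nat i)) N
                    = theta (2 * Z.of_nat N + 1)%Z - theta 1%Z).
  { induction N; [simpl; ring|]. rewrite !sumn_S.
    replace (theta (2 * Z.of_nat (S N) + 1)%Z) with (theta (2 * Z.of_nat (S N) + 1)%Z - theta (2 * Z.of_nat N + 1)%Z + theta (2 * Z.of_nat N + 1)%Z) by ring.
    unfold eta, delta.
    replace (2 * (0 + 1 + Z.of_nat N) - 1)%Z with (2 * Z.of_nat N + 1)%Z by lia.
    replace (2 * (1 + Z.of_nat N) + 1)%Z with (2 * Z.of_nat (S N) + 1)%Z by lia.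
    replace (2 * (1 + Z.of_nat N))%Z with (2 * (0 + 1 + Z.of_nat N))%Z by lia.
    unfold eta, delta in IHN. lra. }
  specialize (H p). pose proof (Hper 1%Z). replace (1 + 2 * Z.of_nat p)%Z with (2 * Z.of_nat p + 1)%Z in H0 by ring.
  lra.
Qed.

Lemma sq_per theta omega p (Homega : 0 < omega)
  (Hper : forall k : Z, theta (k + 2 * Z.of_nat p)%Z = theta k + omega) l :
  s_seq theta (l + Z.of_nat p) = s_seq theta l + psi_omega theta omega p.
Proof. rewrite sq_add. rewrite (eta_sum_const theta omega p Homega Hper (l+1)). auto. Qed.

Lemma Psi_pos theta omega p (Homega : 0 < omega) (Hmono : forall k : Z, theta k < theta (k + 1)%Z)
  (Hper : forall k : Z, theta (k + 2 * Z.of_nat p)%Z = theta k + omega) : 0 < psi_omega theta omega p.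
Proof.
  rewrite <- (eta_sum_const theta omega p Homega Hper 0). pose proof (p_pos _ _ _ Homega Hper).
  destruct p; [lia|]. rewrite sumn_S. pose proof (eta_pos theta Hmono (0 + Z.of_nat p)).
  assert (0 <= sumn (fun i => eta theta (0 + Z.of_nat i)) p) by (apply sumn_nonneg; intros; left; apply eta_pos; auto). lra.
Qed.

Lemma sq_mono theta (Hmono : forall k : Z, theta k < theta (k + 1)%Z) l l' :
  (l <= l')%Z -> s_seq theta l <= s_seq theta l'.
Proof.
  intros H. replace l' with (l + Z.of_nat (Z.to_nat (l' - l)))%Z by lia. rewrite sq_add.
  assert (0 <= sumn (fun i => eta theta (l + 1 + Z.of_nat i)) (Z.to_nat (l' - l))) by (apply sumn_nonneg; intros; left; apply eta_pos; auto).
  lra.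
Qed.

Lemma sq_mult theta omega p (Homega : 0 < omega)
  (Hper : forall k : Z, theta (k + 2 * Z.of_nat p)%Z = theta k + omega) l q :
  s_seq theta (l + Z.of_nat (p * q)) = s_seq theta l + INR q * psi_omega theta omega p.
Proof.
  induction q. { rewrite Nat.mul_0_r. simpl. rewrite Z.add_0_r. ring. }
  replace (l + Z.of_nat (p * S q))%Z with ((l + Z.of_nat (p * q)) + Z.of_nat p)%Z by lia.
  rewrite (sq_per theta omega p Homega Hper). rewrite IHq, S_INR. ring.
Qed.

Lemma sq_gap theta omega p (Homega : 0 < omega) (Hmono : forall k : Z, theta k < theta (k + 1)%Z)
  (Hper : forall k : Z, theta (k + 2 * Z.of_nat p)%Z = theta k + omega) m j :
  psi_omega theta omega p * INR (j / p) <= s_seq theta m - s_seq theta (m - Z.of_nat j).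
Proof.
  pose proof (p_pos _ _ _ Homega Hper).
  assert (Hq : (p * (j / p) <= j)%nat) by (apply Nat.mul_div_le; lia).
  pose proof (sq_mult theta omega p Homega Hper (m - Z.of_nat (p * (j/p))) (j/p)).
  replace (m - Z.of_nat (p * (j / p)) + Z.of_nat (p * (j / p)))%Z with m in H0 by ring.
  pose proof (sq_mono theta Hmono (m - Z.of_nat j) (m - Z.of_nat (p * (j / p)))).
  assert (s_seq theta (m - Z.of_nat j) <= s_seq theta (m - Z.of_nat (p * (j / p)))) by (apply H1; lia).
  lra.
Qed.


Lemma delta_per_mult theta omega p
  (Hper : forall k : Z, theta (k + 2 * Z.of_nat p)%Z = theta k + omega) k q :
  delta theta (k + Z.of_nat p * q) = delta theta k.
Proof.
  rewrite (Z_ind_shift (fun q => delta theta (k + Z.of_nat p * q))).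
  - simpl. rewrite Z.mul_0_r, Z.add_0_r. auto.
  - intros l. replace (k + Z.of_nat p * (l + 1))%Z with (k + Z.of_nat p * l + Z.of_nat p)%Z by ring.
    apply (delta_per theta omega p Hper).
Qed.

Lemma delta_le_max theta omega p (Homega : 0 < omega)
  (Hper : forall k : Z, theta (k + 2 * Z.of_nat p)%Z = theta k + omega) k :
  delta theta k <= delta_max theta p.
Proof.
  pose proof (p_pos _ _ _ Homega Hper) as Hp.
  set (P := Z.of_nat p).
  assert (HP : (0 < P)%Z) by (unfold P; lia).
  set (j := ((k - 1) mod P + 1)%Z).
  assert (Hk : k = (j + P * ((k-1) / P))%Z).
  { unfold j. pose proof (Z.div_mod (k-1) P ltac:(lia)). lia. }
  assert (Hj : (1 <= j <= P)%Z) by (unfold j; pose proof (Z.mod_pos_bound (k-1) P HP); lia).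
  rewrite Hk. unfold P. rewrite (delta_per_mult theta omega p Hper).
  unfold delta_max. apply fold_max_ge. apply in_map_iff. exists (Z.to_nat j). split; [f_equal; lia|].
  apply in_seq. unfold P in Hj. lia.
Qed.


Definition psi theta (l : Z) (tau : R) : R := s_seq theta l - theta (2*l)%Z + tau.

Lemma psi_left theta l : psi theta l (theta (2*l-1)%Z) = s_seq theta (l-1).
Proof. unfold psi. pose proof (sq_step theta l). lra. Qed.
Lemma psi_right theta l : psi theta l (theta (2*l)%Z) = s_seq theta l.
Proof. unfold psi. ring. Qed.

Lemma dpl_ext f g x l : (forall y, f y = g y) -> derivable_pt_lim f x l -> derivable_pt_lim g x l.
Proof. intros H D eps He. destruct (D eps He) as [d Hd]. exists d. intros. rewrite <- !H. auto. Qed.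

Lemma d_aff mu c x : derivable_pt_lim (fun y => mu * (y + c)) x mu.
Proof.
  intros eps He. exists (mkposreal 1 Rlt_0_1). intros h Hh _.
  replace ((mu * (x + h + c) - mu * (x + c)) / h - mu) with 0 by (field; auto).
  rewrite Rabs_R0; auto.
Qed.

Lemma d_expaff C mu c x : derivable_pt_lim (fun y => C * exp (mu * (y + c))) x (C * (mu * exp (mu * (x + c)))).
Proof.
  pose proof (derivable_pt_lim_comp _ exp x _ _ (d_aff mu c x) (derivable_pt_lim_exp _)) as H.
  pose proof (derivable_pt_lim_scal _ C x _ H) as H2.
  replace (C * (mu * exp (mu * (x + c)))) with (C * (exp (mu * (x + c)) * mu)) by ring.
  eapply dpl_ext; [| exact H2]. intros y. reflexivity.
Qed.

Definition Vf theta (lm d A : R) (k1 l : Z) (tau : R) : R :=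
  A * exp (lm * s_seq theta (k1 - 1)) * exp (d * (psi theta l tau - s_seq theta (k1 - 1)))
  * prodn (fun i => 1 + delta theta (k1 + Z.of_nat i) * d) (Z.to_nat (l - k1)).
Definition Bf theta (lm d A : R) (k1 l : Z) (tau : R) : R :=
  exp (- lm * psi theta l tau) * Vf theta lm d A k1 l tau.

Lemma prodn_pos g k : (forall i, 0 < g i) -> 0 < prodn g k.
Proof. intros H; induction k; simpl; [lra| apply Rmult_lt_0_compat; auto]. Qed.

Lemma Vf_nonneg theta (Hmono : forall k : Z, theta k < theta (k + 1)%Z) lm d A k1 l tau :
  0 <= d -> 0 <= A -> 0 <= Vf theta lm d A k1 l tau.
Proof.
  intros Hd HA. unfold Vf. apply Rmult_le_pos; [apply Rmult_le_pos; [apply Rmult_le_pos|]|]; auto; try (left; apply exp_pos).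
  left; apply prodn_pos. intros. pose proof (delta_pos theta Hmono (k1 + Z.of_nat i)). pose proof (Rmult_le_pos _ _ (Rlt_le _ _ H) Hd). lra.
Qed.
Lemma Bf_nonneg theta (Hmono : forall k : Z, theta k < theta (k + 1)%Z) lm d A k1 l tau :
  0 <= d -> 0 <= A -> 0 <= Bf theta lm d A k1 l tau.
Proof. intros. unfold Bf. apply Rmult_le_pos; [left; apply exp_pos| apply Vf_nonneg; auto]. Qed.

Lemma Vf_jump theta lm d A k1 l : (k1 <= l)%Z ->
  Vf theta lm d A k1 (l + 1) (theta (2*(l+1)-1)%Z) = Vf theta lm d A k1 l (theta (2*l)%Z) * (1 + delta theta l * d).
Proof.
  intros H. unfold Vf. rewrite psi_left, psi_right. replace (l + 1 - 1)%Z with l by ring.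
  replace (Z.to_nat (l + 1 - k1)) with (S (Z.to_nat (l - k1))) by lia. simpl prodn.
  replace (k1 + Z.of_nat (Z.to_nat (l - k1)))%Z with l by lia. ring.
Qed.


Lemma prodZ_empty g l : prodZ g l (l - 1) = 1.
Proof. rewrite prodZ_prodn. replace (l - 1 - l + 1)%Z with 0%Z by ring. reflexivity. Qed.
Lemma prodZ_split g l k : (l <= k)%Z -> prodZ g l k = g l * prodZ g (l + 1) k.
Proof.
  intros H. rewrite !prodZ_prodn. replace (Z.to_nat (k - l + 1)) with (S (Z.to_nat (k - (l + 1) + 1))) by lia.
  rewrite prodn_shift. f_equal. f_equal; lia. apply prodn_ext. intros; f_equal; lia.
Qed.

Lemma exp_mono_neg x lam lm : 0 <= x -> lm <= lam -> exp (- lam * x) <= exp (- lm * x).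
Proof.
  intros. assert (H1 : - lam * x <= - lm * x) by nra.
  destruct H1 as [H1|H1]; [left; apply exp_increasing; auto| rewrite H1; lra].
Qed.

Section Core.
End Core.

Lemma core theta (Hmono : forall k : Z, theta k < theta (k + 1)%Z)
  (a K lam lm d A Z0 P Q : R) (k1 k : Z) (t : R) (g1 g2 : R -> R) (D1 D2 : Z -> R -> R) (ehat : Z -> R) :
  (k1 <= k)%Z -> theta (2*k-1)%Z <= t <= theta (2*k)%Z ->
  0 < lam -> lm <= lam -> 0 <= K -> 0 <= P -> 0 <= Q -> 0 <= d -> 0 <= A -> K * Z0 <= A -> K * P <= d ->
  (forall l, (k1 <= l <= k)%Z -> forall T, s_seq theta (l-1) <= T <= s_seq theta l -> T <= psi theta k t ->
     Rabs (exp (- a * (psi theta k t - T)) * prodZ (fun nu => 1 - delta theta nu * a) l (k-1))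
       <= K * exp (- lam * (psi theta k t - T))) ->
  (forall l tau, (k1 <= l <= k)%Z -> theta (2*l-1)%Z <= tau <= theta (2*l)%Z ->
     deriv_within g1 (theta (2*l-1)%Z) (theta (2*l)%Z) tau (D1 l tau)) ->
  (forall l tau, (k1 <= l <= k)%Z -> theta (2*l-1)%Z <= tau <= theta (2*l)%Z ->
     deriv_within g2 (theta (2*l-1)%Z) (theta (2*l)%Z) tau (D2 l tau)) ->
  (forall l, (k1 <= l < k)%Z -> g1 (theta (2*l+1)%Z) - g2 (theta (2*l+1)%Z)
      = (1 - delta theta l * a) * (g1 (theta (2*l)%Z) - g2 (theta (2*l)%Z)) + delta theta l * ehat l) ->
  (forall l tau, (k1 <= l <= k)%Z -> theta (2*l-1)%Z < tau < theta (2*l)%Z ->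
     Rabs (D1 l tau - D2 l tau + a * (g1 tau - g2 tau)) <= P * Bf theta lm d A k1 l tau + Q) ->
  (forall l, (k1 <= l < k)%Z -> Rabs (ehat l) <= P * Bf theta lm d A k1 l (theta (2*l)%Z) + Q) ->
  Rabs (g1 (theta (2*k1-1)%Z) - g2 (theta (2*k1-1)%Z)) <= Z0 ->
  Rabs (g1 t - g2 t) <= Bf theta lm d A k1 k t + K * Q / lam
     + K * Q * sumn (fun i => delta theta (k1 + Z.of_nat i) * exp (- lam * (psi theta k t - s_seq theta (k1 + Z.of_nat i)))) (Z.to_nat (k - k1)).
Proof.
  intros Hk Ht Hlam Hlm HK HP HQ Hd HA HKZ HKP HUB Hd1 Hd2 Hjump He Hehat Hz0.
  set (Sg := psi theta k t).
  set (s0 := s_seq theta (k1 - 1)).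
  set (Pr := fun l => prodZ (fun nu => 1 - delta theta nu * a) l (k-1)).
  set (q := fun l tau => exp (- a * (Sg - psi theta l tau)) * Pr l * (g1 tau - g2 tau)).
  set (V := fun l tau => Vf theta lm d A k1 l tau).
  set (W := fun l => K * Q / lam * (exp (- lam * (Sg - s_seq theta (l-1))) - exp (- lam * (Sg - s0)))
          + K * Q * sumn (fun i => delta theta (k1 + Z.of_nat i) * exp (- lam * (Sg - s_seq theta (k1 + Z.of_nat i)))) (Z.to_nat (l - k1))).
  set (G := fun l tau => K * Q / lam * exp (- lam * (Sg - psi theta l tau)) + exp (- lm * Sg) * V l tau).
  assert (HSk : s_seq theta (k-1) <= Sg).
  { unfold Sg, psi. pose proof (sq_step theta k). lra. }
  assert (HsS : forall l, (l <= k - 1)%Z -> s_seq theta l <= Sg).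
  { intros l Hl. pose proof (sq_mono theta Hmono l (k-1) Hl). lra. }
  assert (Hcont : forall l e, (k1 <= l <= k)%Z -> theta (2*l-1)%Z <= e <= theta (2*l)%Z -> (l = k -> e <= t) ->
            Rabs (q l e - q l (theta (2*l-1)%Z)) <= G l e - G l (theta (2*l-1)%Z)).
  { intros l e Hl He1 Hek.
    assert (Hab : theta (2*l-1)%Z < theta (2*l)%Z) by (pose proof (Hmono (2*l-1)%Z); replace (2*l-1+1)%Z with (2*l)%Z in H by ring; auto).
    set (c := s_seq theta l - theta (2*l)%Z - Sg).
    set (w := fun tau => exp (- a * (Sg - psi theta l tau)) * Pr l).
    set (cV := exp (- lm * Sg) * (A * exp (lm * s0) * prodn (fun i => 1 + delta theta (k1 + Z.of_nat i) * d) (Z.to_nat (l - k1)))).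
    set (c2 := s_seq theta l - theta (2*l)%Z - s0).
    assert (Hw : forall x, w x = Pr l * exp (a * (x + c))).
    { intros x. unfold w, c, psi. rewrite Rmult_comm. f_equal. f_equal. ring. }
    assert (HVx : forall x, exp (- lm * Sg) * V l x = cV * exp (d * (x + c2))).
    { intros x. unfold cV, V, Vf, c2, psi, s0.
      assert (E : s_seq theta l - theta (2*l)%Z + x - s_seq theta (k1 - 1) = x + (s_seq theta l - theta (2*l)%Z - s_seq theta (k1 - 1))) by ring.
      rewrite E. ring. }
    assert (HG : forall x, G l x = K * Q / lam * exp (lam * (x + c)) + cV * exp (d * (x + c2))).
    { intros x. unfold G. rewrite HVx. f_equal. f_equal. f_equal. unfold c, psi. ring. }
    assert (Hdw : forall x, derivable_pt_lim w x (a * w x)).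
    { intros x. eapply dpl_ext. intros y; symmetry; apply Hw.
      rewrite Hw. replace (a * (Pr l * exp (a * (x + c)))) with (Pr l * (a * exp (a * (x + c)))) by ring.
      apply d_expaff. }
    assert (HdG : forall x, derivable_pt_lim (G l) x (K * Q * exp (- lam * (Sg - psi theta l x)) + d * (exp (- lm * Sg) * V l x))).
    { intros x. eapply dpl_ext. intros y; symmetry; apply HG.
      assert (E1 : K * Q * exp (- lam * (Sg - psi theta l x)) = K * Q / lam * (lam * exp (lam * (x + c)))).
      { unfold c, psi. field_simplify; [|lra]. f_equal. f_equal. ring. }
      assert (E2 : d * (exp (- lm * Sg) * V l x) = cV * (d * exp (d * (x + c2)))).
      { rewrite HVx. ring. }
      rewrite E1, E2. apply derivable_pt_lim_plus; apply d_expaff. }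
    assert (Hq : forall x, q l x = w x * (g1 x - g2 x)) by (intros; unfold q, w; ring).
    rewrite !Hq.
    apply (mv_main w (fun x => a * w x) g1 g2 (D1 l) (D2 l) (G l)
             (fun x => K * Q * exp (- lam * (Sg - psi theta l x)) + d * (exp (- lm * Sg) * V l x))
             (theta (2*l-1)%Z) (theta (2*l)%Z) e Hab He1 Hdw HdG).
    - intros; apply Hd1; auto.
    - intros; apply Hd2; auto.
    - intros x Hx.
      assert (Hxin : theta (2*l-1)%Z < x < theta (2*l)%Z) by lra.
      replace (a * w x * (g1 x - g2 x) + w x * (D1 l x - D2 l x)) with (w x * (D1 l x - D2 l x + a * (g1 x - g2 x))) by ring.
      rewrite Rabs_mult.
      set (T := psi theta l x).
      assert (HT1 : s_seq theta (l-1) <= T <= s_seq theta l).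
      { unfold T. rewrite <- psi_left, <- psi_right. unfold psi. lra. }
      assert (HTS : T <= Sg).
      { destruct (Z.eq_dec l k) as [E|E].
        - subst l. unfold T, Sg, psi. specialize (Hek eq_refl). lra.
        - pose proof (HsS l ltac:(lia)). lra. }
      assert (Hwx : Rabs (w x) <= K * exp (- lam * (Sg - T))) by (apply HUB; auto).
      pose proof (He l x Hl Hxin) as Hex.
      assert (HB0 : 0 <= Bf theta lm d A k1 l x) by (apply Bf_nonneg; auto).
      assert (Hexp : exp (- lam * (Sg - T)) <= exp (- lm * (Sg - T))) by (apply exp_mono_neg; lra).
      assert (HBeq : exp (- lm * (Sg - T)) * Bf theta lm d A k1 l x = exp (- lm * Sg) * V l x).
      { unfold Bf, V. fold T. rewrite <- Rmult_assoc, <- exp_plus. f_equal. f_equal. ring. }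
      eapply Rle_trans. apply Rmult_le_compat; try apply Rabs_pos. exact Hwx. exact Hex.
      rewrite Rmult_plus_distr_l.
      assert (K * exp (- lam * (Sg - T)) * (P * Bf theta lm d A k1 l x) <= d * (exp (- lm * Sg) * V l x)).
      { rewrite <- HBeq. replace (K * exp (- lam * (Sg - T)) * (P * Bf theta lm d A k1 l x)) with ((K * P) * (exp (- lam * (Sg - T)) * Bf theta lm d A k1 l x)) by ring.
        apply Rmult_le_compat; [apply Rmult_le_pos; auto | apply Rmult_le_pos; [left; apply exp_pos| auto] | auto | apply Rmult_le_compat_r; auto]. }
      unfold T in *. lra. }

  assert (Hjq : forall l, (k1 <= l < k)%Z ->
     q (l+1)%Z (theta (2*(l+1)-1)%Z) = q l (theta (2*l)%Z) + exp (- a * (Sg - s_seq theta l)) * Pr (l+1)%Z * (delta theta l * ehat l)).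
  { intros l Hl. unfold q. rewrite psi_left, psi_right. replace (l + 1 - 1)%Z with l by ring.
    replace (2 * (l + 1) - 1)%Z with (2*l+1)%Z by ring. rewrite (Hjump l Hl).
    unfold Pr. rewrite (prodZ_split _ l (k-1)) by lia. ring. }
  set (eS := exp (- lm * Sg)).
  assert (Hinv : forall j, (j <= Z.to_nat (k - k1))%nat ->
     Rabs (q (k1 + Z.of_nat j)%Z (theta (2*(k1 + Z.of_nat j)-1)%Z)) <= eS * V (k1 + Z.of_nat j)%Z (theta (2*(k1 + Z.of_nat j)-1)%Z) + W (k1 + Z.of_nat j)%Z).
  { induction j as [|j IH]; intros Hj.
    - change (Z.of_nat 0) with 0%Z. rewrite Z.add_0_r. unfold q, W, V. rewrite psi_left. fold s0.
      replace (k1 - k1)%Z with 0%Z by ring. simpl sumn. rewrite Rminus_diag, !Rmult_0_r, !Rplus_0_r.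
      rewrite Rabs_mult.
      assert (H1 : Rabs (exp (- a * (Sg - s0)) * Pr k1) <= K * exp (- lam * (Sg - s0))).
      { apply HUB; [lia| |]. split; [unfold s0; lra| apply sq_mono; auto; lia]. unfold s0. apply HsS. lia. }
      assert (H2 : exp (- lam * (Sg - s0)) <= exp (- lm * (Sg - s0))).
      { apply exp_mono_neg; auto. unfold s0. pose proof (HsS (k1 - 1)%Z ltac:(lia)). lra. }
      assert (HZ0 : 0 <= Z0) by (pose proof (Rabs_pos (g1 (theta (2 * k1 - 1)%Z) - g2 (theta (2 * k1 - 1)%Z))); lra).
      assert (E : eS * Vf theta lm d A k1 k1 (theta (2 * k1 - 1)%Z) = A * exp (- lm * (Sg - s0))).
      { unfold eS, Vf. rewrite psi_left. fold s0. replace (k1 - k1)%Z with 0%Z by ring. simpl prodn.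
        rewrite Rminus_diag, Rmult_0_r, exp_0. replace (- lm * (Sg - s0)) with (- lm * Sg + lm * s0) by ring.
        rewrite exp_plus. ring. }
      rewrite E.
      eapply Rle_trans. apply Rmult_le_compat; try apply Rabs_pos. exact H1. exact Hz0.
      replace (K * exp (- lam * (Sg - s0)) * Z0) with ((K * Z0) * exp (- lam * (Sg - s0))) by ring.
      apply Rmult_le_compat; auto. apply Rmult_le_pos; auto. left; apply exp_pos.
    - set (l := (k1 + Z.of_nat j)%Z) in *.
      assert (Hl : (k1 <= l < k)%Z) by (unfold l; lia).
      specialize (IH ltac:(lia)).
      replace (k1 + Z.of_nat (S j))%Z with (l + 1)%Z by (unfold l; lia).
      rewrite (Hjq l Hl).
      pose proof (Hcont l (theta (2*l)%Z) ltac:(lia) ltac:(pose proof (Hmono (2*l-1)%Z); replace (2*l-1+1)%Z with (2*l)%Z in H by ring; lra) ltac:(intros; lia)) as Hc.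
      assert (HU : Rabs (exp (- a * (Sg - s_seq theta l)) * Pr (l + 1)%Z) <= K * exp (- lam * (Sg - s_seq theta l))).
      { apply HUB; [lia| |]. replace (l + 1 - 1)%Z with l by ring. split; [lra|]. apply sq_mono; auto; lia.
        apply HsS; lia. }
      pose proof (Hehat l Hl) as Hel.
      assert (HBl : Bf theta lm d A k1 l (theta (2*l)%Z) = exp (- lm * s_seq theta l) * V l (theta (2*l)%Z)).
      { unfold Bf, V. rewrite psi_right. auto. }
      assert (HV0 : 0 <= V l (theta (2*l)%Z)) by (apply Vf_nonneg; auto).
      assert (Hex : exp (- lam * (Sg - s_seq theta l)) <= exp (- lm * (Sg - s_seq theta l))) by (apply exp_mono_neg; auto; pose proof (HsS l ltac:(lia)); lra).
      assert (Hdl : 0 < delta theta l) by (apply delta_pos; auto).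
      assert (Hjb : Rabs (exp (- a * (Sg - s_seq theta l)) * Pr (l + 1)%Z * (delta theta l * ehat l))
                   <= delta theta l * (d * (eS * V l (theta (2*l)%Z))) + K * Q * (delta theta l * exp (- lam * (Sg - s_seq theta l)))).
      { rewrite (Rabs_mult (_ * _) (delta theta l * ehat l)), (Rabs_mult (delta theta l) (ehat l)), (Rabs_pos_eq (delta theta l)) by lra.
        eapply Rle_trans. apply Rmult_le_compat; [apply Rabs_pos| apply Rmult_le_pos; [lra|apply Rabs_pos]| exact HU| apply Rmult_le_compat_l; [lra| exact Hel]].
        rewrite HBl.
        assert (E : exp (- lm * (Sg - s_seq theta l)) * exp (- lm * s_seq theta l) = eS).
        { unfold eS. rewrite <- exp_plus. f_equal. ring. }
        assert (H3 : K * exp (- lam * (Sg - s_seq theta l)) * (P * (exp (- lm * s_seq theta l) * V l (theta (2 * l)%Z)))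
                     <= d * (eS * V l (theta (2*l)%Z))).
        { rewrite <- E. replace (K * exp (- lam * (Sg - s_seq theta l)) * (P * (exp (- lm * s_seq theta l) * V l (theta (2 * l)%Z))))
            with ((K * P) * (exp (- lam * (Sg - s_seq theta l)) * (exp (- lm * s_seq theta l) * V l (theta (2 * l)%Z)))) by ring.
          replace (d * (exp (- lm * (Sg - s_seq theta l)) * exp (- lm * s_seq theta l) * V l (theta (2 * l)%Z)))
            with (d * (exp (- lm * (Sg - s_seq theta l)) * (exp (- lm * s_seq theta l) * V l (theta (2 * l)%Z)))) by ring.
          apply Rmult_le_compat; [apply Rmult_le_pos; auto| apply Rmult_le_pos; [left; apply exp_pos| apply Rmult_le_pos; [left; apply exp_pos|auto]]| auto|].
          apply Rmult_le_compat_r; auto. apply Rmult_le_pos; [left; apply exp_pos|auto]. }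
        pose proof (exp_pos (- lam * (Sg - s_seq theta l))).
        nra. }
      assert (HVj : V (l + 1)%Z (theta (2 * (l + 1) - 1)%Z) = V l (theta (2*l)%Z) * (1 + delta theta l * d)).
      { unfold V. apply Vf_jump. lia. }
      assert (HWj : W (l + 1)%Z = K * Q / lam * (exp (- lam * (Sg - s_seq theta l)) - exp (- lam * (Sg - s0)))
                    + K * Q * (sumn (fun i => delta theta (k1 + Z.of_nat i) * exp (- lam * (Sg - s_seq theta (k1 + Z.of_nat i)))) (Z.to_nat (l - k1))
                               + delta theta l * exp (- lam * (Sg - s_seq theta l)))).
      { unfold W. replace (l + 1 - 1)%Z with l by ring.
        replace (Z.to_nat (l + 1 - k1)) with (S (Z.to_nat (l - k1))) by lia. rewrite sumn_S.
        replace (k1 + Z.of_nat (Z.to_nat (l - k1)))%Z with l by lia. auto. }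
      assert (HWl : W l = K * Q / lam * (exp (- lam * (Sg - s_seq theta (l-1))) - exp (- lam * (Sg - s0)))
                    + K * Q * sumn (fun i => delta theta (k1 + Z.of_nat i) * exp (- lam * (Sg - s_seq theta (k1 + Z.of_nat i)))) (Z.to_nat (l - k1))) by reflexivity.
      assert (HGd : G l (theta (2*l)%Z) - G l (theta (2*l-1)%Z) =
                    K * Q / lam * (exp (- lam * (Sg - s_seq theta l)) - exp (- lam * (Sg - s_seq theta (l-1))))
                    + eS * (V l (theta (2*l)%Z) - V l (theta (2*l-1)%Z))).
      { unfold G. rewrite psi_left, psi_right. unfold eS. ring. }
      rewrite HVj, HWj.
      eapply Rle_trans. apply Rabs_triang.
      assert (Habs : Rabs (q l (theta (2 * l)%Z)) <= Rabs (q l (theta (2 * l - 1)%Z)) + (G l (theta (2*l)%Z) - G l (theta (2*l-1)%Z))).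
      { pose proof (Rabs_triang_inv (q l (theta (2 * l)%Z)) (q l (theta (2 * l - 1)%Z))). lra. }
      rewrite HWl in IH. rewrite HGd in Habs. nra. }
  specialize (Hinv (Z.to_nat (k - k1)) (le_n _)).
  replace (k1 + Z.of_nat (Z.to_nat (k - k1)))%Z with k in Hinv by lia.
  pose proof (Hcont k t ltac:(lia) Ht ltac:(intros; lra)) as Hc.
  assert (Hqt : q k t = g1 t - g2 t).
  { unfold q, Pr. rewrite prodZ_empty. fold Sg. rewrite Rminus_diag, Rmult_0_r, exp_0. ring. }
  rewrite Hqt in Hc.
  assert (HGd : G k t - G k (theta (2*k-1)%Z) =
                K * Q / lam * (1 - exp (- lam * (Sg - s_seq theta (k-1))))
                + eS * (V k t - V k (theta (2*k-1)%Z))).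
  { unfold G. rewrite psi_left. fold Sg. rewrite Rminus_diag, Rmult_0_r, exp_0. unfold eS. ring. }
  assert (Habs : Rabs (g1 t - g2 t) <= Rabs (q k (theta (2 * k - 1)%Z)) + (G k t - G k (theta (2*k-1)%Z))).
  { pose proof (Rabs_triang_inv (g1 t - g2 t) (q k (theta (2 * k - 1)%Z))). lra. }
  assert (HBk : Bf theta lm d A k1 k t = eS * V k t) by (unfold Bf, eS, V; fold Sg; auto).
  rewrite HBk. unfold W in Hinv. rewrite HGd in Habs.
  assert (Hpos : 0 <= K * Q / lam * exp (- lam * (Sg - s0))).
  { apply Rmult_le_pos; [apply Rmult_le_pos; [apply Rmult_le_pos; auto| left; apply Rinv_0_lt_compat; auto]| left; apply exp_pos]. }
  fold Sg. lra.
Qed.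


Lemma lim_nonneg (f : R -> R) e0 : 0 < e0 -> continuity_pt f 0 ->
  (forall e, 0 < e < e0 -> 0 <= f e) -> 0 <= f 0.
Proof.
  intros He0 Hc H. destruct (Rle_or_lt 0 (f 0)) as [|Hn]; auto. exfalso.
  unfold continuity_pt, continue_in, limit1_in, limit_in in Hc; simpl in Hc; unfold R_dist in Hc.
  destruct (Hc (- f 0) ltac:(lra)) as [alp [Halp Hx]].
  set (e := Rmin alp e0 / 2).
  assert (He : 0 < e) by (unfold e; apply Rdiv_lt_0_compat; [apply Rmin_pos; auto| lra]).
  assert (He1 : e < alp) by (unfold e; pose proof (Rmin_l alp e0); lra).
  assert (He2 : e < e0) by (unfold e; pose proof (Rmin_r alp e0); lra).
  specialize (Hx e). assert (Hfe := H e ltac:(lra)).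
  assert (Rabs (f e - f 0) < - f 0).
  { apply Hx. split; [split; [exact I| lra]|]. rewrite Rminus_0_r, Rabs_pos_eq; lra. }
  unfold Rabs in H0; destruct Rcase_abs in H0; lra.
Qed.

Lemma cont_expaff C mu c : continuity_pt (fun y => C * exp (mu * (y + c))) 0.
Proof. apply derivable_continuous_pt. eexists. apply d_expaff. Qed.

Lemma ind_case x y : y <= x -> ((if Req_dec_T x y then 1 else 0) = 1 /\ x = y) \/ ((if Req_dec_T x y then 1 else 0) = 0 /\ y < x).
Proof. intros H. destruct (Req_dec_T x y) as [E|E]; [left; auto| right; split; auto]. destruct H; [auto| congruence]. Qed.

Lemma ub_ext theta (Hmono : forall k : Z, theta k < theta (k + 1)%Z) (g : Z -> R) a K lam :
  (forall l k tau s, s_seq theta (l-1) < tau <= s_seq theta l -> s_seq theta k < s <= s_seq theta (k+1) -> tau <= s ->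
     Rabs (exp (- a * (s - tau)) * prodZ g l k) <= K * exp (- lam * (s - tau))) ->
  forall l k T S, (l <= k)%Z -> s_seq theta (l-1) <= T <= s_seq theta l -> s_seq theta (k-1) <= S <= s_seq theta k -> T <= S ->
     Rabs (exp (- a * (S - T)) * prodZ g l (k-1)) <= K * exp (- lam * (S - T)).
Proof.
  intros HU l k T S Hlk HT HS HTS.
  assert (Hgl : s_seq theta (l-1) < s_seq theta l) by (pose proof (sq_step theta l); pose proof (Hmono (2*l-1)%Z); replace (2*l-1+1)%Z with (2*l)%Z in H0 by ring; lra).
  assert (Hgk : s_seq theta (k-1) < s_seq theta k) by (pose proof (sq_step theta k); pose proof (Hmono (2*k-1)%Z); replace (2*k-1+1)%Z with (2*k)%Z in H0 by ring; lra).
  set (bT := if Req_dec_T T (s_seq theta (l-1)) then 1 else 0).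
  set (bS := if Req_dec_T S (s_seq theta (k-1)) then 1 else 0).
  set (e0 := Rmin (Rmin (s_seq theta l - s_seq theta (l-1)) (s_seq theta k - s_seq theta (k-1))) (if Req_dec_T S T then 1 else S - T)).
  assert (He0 : 0 < e0).
  { unfold e0. apply Rmin_pos; [apply Rmin_pos; lra|]. destruct (Req_dec_T S T) as [E|E]; [lra|].
    destruct HTS as [H|H]; [lra| subst; congruence]. }
  assert (He0a : e0 <= s_seq theta l - s_seq theta (l-1)) by (unfold e0; eapply Rle_trans; [apply Rmin_l| apply Rmin_l]).
  assert (He0b : e0 <= s_seq theta k - s_seq theta (k-1)) by (unfold e0; eapply Rle_trans; [apply Rmin_l| apply Rmin_r]).
  assert (He0c : e0 <= (if Req_dec_T S T then 1 else S - T)) by (unfold e0; apply Rmin_r).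
  set (P := prodZ g l (k-1)).
  set (c := bS - bT).
  assert (Hmain : forall e, 0 < e < e0 ->
     Rabs (exp (- a * ((S - T) + c * e)) * P) <= K * exp (- lam * ((S - T) + c * e))).
  { intros e He.
    assert (E : S + bS * e - (T + bT * e) = (S - T) + c * e) by (unfold c; ring).
    rewrite <- E.
    destruct (ind_case T (s_seq theta (l-1)) ltac:(lra)) as [[HbT ET]|[HbT ET]]; fold bT in HbT; rewrite HbT;
    destruct (ind_case S (s_seq theta (k-1)) ltac:(lra)) as [[HbS ES]|[HbS ES]]; fold bS in HbS; rewrite HbS;
    (apply HU; [lra| replace (k - 1 + 1)%Z with k by ring; lra|]);
    (destruct (Req_dec_T S T) as [EST|EST]; [|destruct HTS as [HTS'|HTS']; [|congruence]]);
    try (assert (e < S - T) by (destruct (Req_dec_T S T) in He0c; [contradiction| lra]); lra);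
    destruct (Z.eq_dec l k) as [Elk|Elk]; try (subst l; lra);
    assert (s_seq theta l <= s_seq theta (k-1)) by (apply sq_mono; auto; lia); lra. }
  set (phi := fun e => K * exp (- lam * c * (e + 0)) * exp (- lam * (S - T))
                      - Rabs (P * exp (- a * c * (e + 0)) * exp (- a * (S - T)))).
  assert (Hphi : forall e, phi e = K * exp (- lam * ((S - T) + c * e)) - Rabs (exp (- a * ((S - T) + c * e)) * P)).
  { intros e. unfold phi. rewrite !Rplus_0_r. f_equal.
    - rewrite Rmult_assoc, <- exp_plus. f_equal. f_equal. ring.
    - f_equal. rewrite Rmult_assoc, <- exp_plus. rewrite Rmult_comm. f_equal. f_equal. ring. }
  assert (Hc : continuity_pt phi 0).
  { unfold phi. apply continuity_pt_minus.
    - apply (continuity_pt_mult (fun y => K * exp (- lam * c * (y + 0))) (fun _ => exp (- lam * (S - T)))).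
      apply cont_expaff. apply continuity_pt_const; intros ? ?; auto.
    - apply (continuity_pt_comp (fun y => P * exp (- a * c * (y + 0)) * exp (- a * (S - T))) Rabs).
      + apply (continuity_pt_mult (fun y => P * exp (- a * c * (y + 0))) (fun _ => exp (- a * (S - T)))).
        apply cont_expaff. apply continuity_pt_const; intros ? ?; auto.
      + apply Rcontinuity_abs. }
  pose proof (lim_nonneg phi e0 He0 Hc) as HL.
  assert (0 <= phi 0).
  { apply HL. intros e He. rewrite Hphi. specialize (Hmain e He). lra. }
  rewrite Hphi in H. rewrite Rmult_0_r, Rplus_0_r in H. fold P. lra.
Qed.


Lemma exp_INR_mult q y : exp (INR q * y) = exp y ^ q.
Proof.
  rewrite <- (exp_ln (exp y ^ q)) by (apply pow_lt, exp_pos).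
  rewrite ln_pow by apply exp_pos. rewrite ln_exp. auto.
Qed.

Lemma geom_sum r M : 0 <= r < 1 -> sumn (fun q => r ^ q) M <= 1 / (1 - r).
Proof.
  intros Hr.
  assert (E : forall M, (1 - r) * sumn (fun q => r ^ q) M = 1 - r ^ M).
  { induction M0; simpl sumn; [simpl; ring|]. rewrite Rmult_plus_distr_l, IHM0. simpl. ring. }
  specialize (E M). pose proof (pow_le r M (proj1 Hr)).
  apply (Rmult_le_reg_l (1 - r)); [lra|]. rewrite E. field_simplify; lra.
Qed.

Lemma sum_div_block r p M : (1 <= p)%nat -> sumn (fun j => r ^ (j / p)) (p * M) = INR p * sumn (fun q => r ^ q) M.
Proof.
  intros Hp. induction M.
  - rewrite Nat.mul_0_r. simpl. ring.
  - replace (p * S M)%nat with (p * M + p)%nat by lia. rewrite sumn_add, IHM.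
    rewrite (sumn_ext (fun i => r ^ ((p * M + i) / p)) (fun _ => r ^ M) p).
    + rewrite sumn_const. rewrite sumn_S. ring.
    + intros i Hi. f_equal. rewrite Nat.mul_comm. rewrite Nat.div_add_l by lia. rewrite Nat.div_small by lia. lia.
Qed.

Lemma sum_div_bound r p n : (1 <= p)%nat -> 0 <= r < 1 -> sumn (fun j => r ^ (j / p)) n <= INR p / (1 - r).
Proof.
  intros Hp Hr. eapply Rle_trans. apply (sumn_mono _ n (p * n)). nia. intros; apply pow_le; lra.
  rewrite sum_div_block by auto. pose proof (geom_sum r n Hr).
  assert (0 <= INR p) by apply pos_INR.
  replace (INR p / (1 - r)) with (INR p * (1 / (1 - r))) by (field; lra).
  apply Rmult_le_compat_l; auto.
Qed.

Lemma count_bound theta omega p (Homega : 0 < omega) (Hmono : forall k : Z, theta k < theta (k + 1)%Z)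
  (Hper : forall k : Z, theta (k + 2 * Z.of_nat p)%Z = theta k + omega) lam k1 n S :
  0 < lam -> s_seq theta (k1 + Z.of_nat n - 1) <= S ->
  sumn (fun i => delta theta (k1 + Z.of_nat i) * exp (- lam * (S - s_seq theta (k1 + Z.of_nat i)))) n
  <= delta_max theta p * INR p / (1 - exp (- lam * psi_omega theta omega p)).
Proof.
  intros Hlam HS.
  pose proof (p_pos _ _ _ Homega Hper) as Hp.
  pose proof (Psi_pos _ _ _ Homega Hmono Hper) as HPsi.
  set (r := exp (- lam * psi_omega theta omega p)).
  assert (Hr : 0 <= r < 1).
  { unfold r. split; [left; apply exp_pos|]. rewrite <- exp_0. apply exp_increasing. nra. }
  set (dm := delta_max theta p).
  assert (Hdm : 0 <= dm) by (unfold dm; pose proof (delta_le_max theta omega p Homega Hper 0); pose proof (delta_pos theta Hmono 0); lra).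
  eapply Rle_trans.
  apply (sumn_le _ (fun i => dm * r ^ ((n - 1 - i) / p))).
  { intros i Hi. apply Rmult_le_compat.
    - left; apply delta_pos; auto.
    - left; apply exp_pos.
    - apply delta_le_max with omega; auto.
    - unfold r. rewrite <- exp_INR_mult.
      pose proof (sq_gap theta omega p Homega Hmono Hper (k1 + Z.of_nat n - 1) (n - 1 - i)).
      replace (k1 + Z.of_nat n - 1 - Z.of_nat (n - 1 - i))%Z with (k1 + Z.of_nat i)%Z in H by lia.
      assert (Hx : psi_omega theta omega p * INR ((n - 1 - i) / p) <= S - s_seq theta (k1 + Z.of_nat i)) by lra.
      destruct (Rle_lt_or_eq_dec _ _ Hx) as [Hx'|Hx'].
      + left. apply exp_increasing. nra.
      + rewrite <- Hx'. right. f_equal. ring. }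
  rewrite sumn_scal.
  rewrite (sumn_rev (fun j => r ^ (j / p)) n).
  pose proof (sum_div_bound r p n Hp Hr).
  replace (dm * INR p / (1 - r)) with (dm * (INR p / (1 - r))) by (field; lra).
  apply Rmult_le_compat_l; auto.
Qed.


Lemma nbsum_mul0 m n r i j (Cw : nat -> nat -> R) : nbsum m n r i j (fun h l => Cw h l * 0) = 0.
Proof.
  unfold nbsum. induction (cells m n) as [|c L IH]; simpl; auto. rewrite IH. destruct in_nbhd; ring.
Qed.

Lemma nl_bound m n r i j (Cw : nat -> nat -> R) (f : R -> R) Mf Lf H0v (x y : vec) :
  is_cell m n i j -> (forall h l, is_cell m n h l -> 0 <= Cw h l) ->
  (forall u, Rabs (f u) <= Mf) -> 0 <= Lf -> (forall u v, Rabs (f u - f v) <= Lf * Rabs (u - v)) ->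
  vnorm m n y <= H0v ->
  Rabs (nbsum m n r i j (fun h l => Cw h l * f (x h l)) * x i j - nbsum m n r i j (fun h l => Cw h l * f (y h l)) * y i j)
  <= (Mf + H0v * Lf) * nbsum m n r i j Cw * vnorm m n (vsub x y).
Proof.
  intros Hij HCw Hf HLf Hf2 Hy.
  set (nx := nbsum m n r i j (fun h l => Cw h l * f (x h l))).
  set (ny := nbsum m n r i j (fun h l => Cw h l * f (y h l))).
  set (Sc := nbsum m n r i j Cw).
  set (z := vnorm m n (vsub x y)).
  assert (HS : 0 <= Sc) by (apply nbsum_nonneg; auto).
  assert (Hz : 0 <= z) by apply vnorm_pos.
  assert (Hnx : Rabs nx <= Mf * Sc).
  { pose proof (nbsum_bound m n r i j Cw (fun h l => f (x h l)) (fun _ _ => 0) Mf) as H.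
    rewrite nbsum_mul0, Rminus_0_r in H. apply H. intros h l Hhl. split; auto. rewrite Rminus_0_r; auto. }
  assert (Hnxy : Rabs (nx - ny) <= Lf * z * Sc).
  { apply nbsum_bound. intros h l Hhl. split; auto. eapply Rle_trans; [apply Hf2|].
    apply Rmult_le_compat_l; auto. apply (vnorm_ge m n (vsub x y) h l Hhl). }
  assert (Hzij : Rabs (x i j - y i j) <= z) by apply (vnorm_ge m n (vsub x y) i j Hij).
  assert (Hyij : Rabs (y i j) <= H0v) by (eapply Rle_trans; [apply vnorm_ge; eauto| auto]).
  replace (nx * x i j - ny * y i j) with (nx * (x i j - y i j) + (nx - ny) * y i j) by ring.
  eapply Rle_trans; [apply Rabs_triang|]. rewrite !Rabs_mult.
  assert (Rabs nx * Rabs (x i j - y i j) <= Mf * Sc * z) by (apply Rmult_le_compat; auto; apply Rabs_pos).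
  assert (Rabs (nx - ny) * Rabs (y i j) <= Lf * z * Sc * H0v) by (apply Rmult_le_compat; auto; apply Rabs_pos).
  nra.
Qed.


Lemma cell_bound (m n r : nat) (a : nat -> nat -> R) (C : nat -> nat -> nat -> nat -> R) (f : R -> R)
  (theta : Z -> R) (Hmono : forall k : Z, theta k < theta (k + 1)%Z) (omega : R) (p : nat) (Homega : 0 < omega)
  (Hper : forall k : Z, theta (k + 2 * Z.of_nat p)%Z = theta k + omega)
  (Mf Lf H0v : R) (HC3 : forall u, Rabs (f u) <= Mf) (HLf : 0 <= Lf)
  (HC4 : forall u v, Rabs (f u - f v) <= Lf * Rabs (u - v))
  (K : nat -> nat -> R) (zeta zeta' : Z -> vec) (x y : R -> vec)
  (Hx : is_sol_N m n r a C f theta zeta x) (Hy : is_sol_N m n r a C f theta zeta' y)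
  (Hxb : forall t, inT0 theta t -> vnorm m n (x t) <= H0v)
  (Hyb : forall t, inT0 theta t -> vnorm m n (y t) <= H0v)
  (i j : nat) (Hij : is_cell m n i j) (HCij : forall h l, is_cell m n h l -> 0 <= C i j h l)
  (HKij : 0 <= K i j) (HKu : u_bound theta omega p (a i j) (K i j))
  (lm d A eta0 th rho : R) (k1 k : Z) (t : R)
  (Hlm : lm <= lambda_ij theta omega p (a i j)) (Hlam : 0 < lambda_ij theta omega p (a i j))
  (Hd : 0 <= d) (HA : 0 <= A) (HKA : K i j * (2 * H0v) <= A)
  (HKP : K i j * ((Mf + H0v * Lf) * nbsum m n r i j (C i j)) <= d)
  (HMf0 : 0 <= Mf) (HH0 : 0 <= H0v) (Heta : 0 <= eta0) (Hth : 0 <= th) (Hrho : 0 <= rho)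
  (Hk : (k1 <= k)%Z) (Ht : theta (2*k-1)%Z <= t <= theta (2*k)%Z)
  (Hz : forall nu, (k1 <= nu <= k)%Z -> vnorm m n (vsub (zeta nu) (zeta' nu)) <= eta0)
  (Hind : forall l tau, (k1 <= l <= k)%Z -> theta (2*l-1)%Z <= tau <= theta (2*l)%Z ->
            vnorm m n (vsub (x tau) (y tau)) <= Bf theta lm d A k1 l tau + th + rho) :
  Rabs (x t i j - y t i j) <= Bf theta lm d A k1 k t
     + ((Mf + H0v * Lf) * nbsum m n r i j (C i j) * (th + rho) + eta0) * coefK theta omega p (a i j) (K i j).
Proof.
  set (lam := lambda_ij theta omega p (a i j)) in *.
  set (Sc := nbsum m n r i j (C i j)).
  assert (HSc : 0 <= Sc) by (apply nbsum_nonneg; auto).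
  set (P := (Mf + H0v * Lf) * Sc).
  assert (HP : 0 <= P) by (unfold P; apply Rmult_le_pos; auto; nra).
  set (Q := P * (th + rho) + eta0).
  assert (HQ : 0 <= Q) by (unfold Q; nra).
  set (nbx := fun (v : vec) => nbsum m n r i j (fun h l0 => C i j h l0 * f (v h l0))).
  set (D1 := fun (l : Z) (tau : R) => - a i j * x tau i j - nbx (x tau) * x tau i j + zeta l i j).
  set (D2 := fun (l : Z) (tau : R) => - a i j * y tau i j - nbx (y tau) * y tau i j + zeta' l i j).
  set (ehat := fun l : Z => - (nbx (x (theta (2*l)%Z)) * x (theta (2*l)%Z) i j - nbx (y (theta (2*l)%Z)) * y (theta (2*l)%Z) i j)
                            + (zeta l i j - zeta' l i j)).
  assert (HinT0 : forall l tau, theta (2*l-1)%Z <= tau <= theta (2*l)%Z -> inT0 theta tau) by (intros; exists l; auto).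
  assert (Hnl : forall tau, inT0 theta tau ->
     Rabs (nbx (x tau) * x tau i j - nbx (y tau) * y tau i j) <= P * vnorm m n (vsub (x tau) (y tau))).
  { intros tau Htau. unfold nbx, P, Sc. apply nl_bound; auto. }
  assert (Hzij : forall nu, (k1 <= nu <= k)%Z -> Rabs (zeta nu i j - zeta' nu i j) <= eta0).
  { intros nu Hnu. eapply Rle_trans; [apply (vnorm_ge m n (vsub (zeta nu) (zeta' nu)) i j Hij)| apply Hz; auto]. }
  pose proof (core theta Hmono (a i j) (K i j) lam lm d A (2 * H0v) P Q k1 k t
     (fun u => x u i j) (fun u => y u i j) D1 D2 ehat Hk Ht Hlam Hlm HKij HP HQ Hd HA HKA) as Hc.
  assert (HSk : s_seq theta (k-1) <= psi theta k t <= s_seq theta k).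
  { rewrite <- psi_left, <- psi_right. unfold psi. lra. }
  cbv beta in Hc. eapply Rle_trans; [apply Hc; clear Hc|].
  - unfold P, Sc. lra.
  - intros l Hl T HT HTS. apply (ub_ext theta Hmono _ (a i j) (K i j) lam); auto; try lia; try (intros; apply HKu; auto).
  - intros l tau Hl Htau. destruct (Hx l i j Hij) as [Hd1 _]. apply Hd1; auto.
  - intros l tau Hl Htau. destruct (Hy l i j Hij) as [Hd2 _]. apply Hd2; auto.
  - intros l Hl. destruct (Hx l i j Hij) as [_ Hj1]. destruct (Hy l i j Hij) as [_ Hj2].
    rewrite Hj1, Hj2. unfold ehat, nbx. ring.
  - intros l tau Hl Htau.
    replace (D1 l tau - D2 l tau + a i j * (x tau i j - y tau i j))
      with (- (nbx (x tau) * x tau i j - nbx (y tau) * y tau i j) + (zeta l i j - zeta' l i j)) by (unfold D1, D2; ring).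
    eapply Rle_trans; [apply Rabs_triang|]. rewrite Rabs_Ropp.
    pose proof (Hnl tau (HinT0 l tau ltac:(lra))).
    pose proof (Hind l tau Hl ltac:(lra)). pose proof (Hzij l Hl).
    unfold Q. nra.
  - intros l Hl. unfold ehat.
    eapply Rle_trans; [apply Rabs_triang|]. rewrite Rabs_Ropp.
    assert (Hl2 : theta (2*l-1)%Z <= theta (2*l)%Z <= theta (2*l)%Z).
    { pose proof (Hmono (2*l-1)%Z). replace (2*l-1+1)%Z with (2*l)%Z in H by ring. lra. }
    pose proof (Hnl (theta (2*l)%Z) (HinT0 l _ Hl2)).
    pose proof (Hind l (theta (2*l)%Z) ltac:(lia) Hl2). pose proof (Hzij l ltac:(lia)).
    unfold Q. nra.
  - assert (Hx1 : theta (2*k1-1)%Z <= theta (2*k1-1)%Z <= theta (2*k1)%Z).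
    { pose proof (Hmono (2*k1-1)%Z). replace (2*k1-1+1)%Z with (2*k1)%Z in H by ring. lra. }
    eapply Rle_trans; [apply (vnorm_ge m n (vsub (x _) (y _)) i j Hij)|].
    eapply Rle_trans; [apply vnorm_sub_le|].
    pose proof (Hxb _ (HinT0 k1 _ Hx1)). pose proof (Hyb _ (HinT0 k1 _ Hx1)). lra.
  -
    pose proof (count_bound theta omega p Homega Hmono Hper lam k1 (Z.to_nat (k - k1)) (psi theta k t) Hlam) as Hcb.
    replace (k1 + Z.of_nat (Z.to_nat (k - k1)) - 1)%Z with (k-1)%Z in Hcb by lia.
    specialize (Hcb (proj1 HSk)).
    unfold coefK. fold lam.
    set (sm := sumn _ _) in *.
    assert (HKQ : 0 <= K i j * Q) by (apply Rmult_le_pos; auto).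
    assert (K i j * Q * sm <= K i j * Q * (delta_max theta p * INR p / (1 - exp (- lam * psi_omega theta omega p)))) by (apply Rmult_le_compat_l; auto).
    assert (E1 : K i j * Q / lam = Q * (K i j / lam)) by (unfold Rdiv; ring).
    assert (E2 : K i j * Q * (delta_max theta p * INR p / (1 - exp (- lam * psi_omega theta omega p)))
              = Q * (INR p * delta_max theta p * K i j / (1 - exp (- lam * psi_omega theta omega p)))) by (unfold Rdiv; ring).
    lra.
Qed.


Lemma limit_pow_le X Y c R0 : 0 <= c < 1 -> 0 <= R0 -> (forall N, X <= Y + c ^ N * R0) -> X <= Y.
Proof.
  intros Hc HR H. destruct (Rle_or_lt X Y) as [|Hlt]; auto. exfalso.
  destruct (pow_lt_1_zero c ltac:(rewrite Rabs_pos_eq; lra) ((X - Y) / (R0 + 1)) ltac:(apply Rdiv_lt_0_compat; lra)) as [N HN].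
  specialize (HN N (le_n _)). specialize (H N). rewrite Rabs_pos_eq in HN by (apply pow_le; lra).
  assert (c ^ N * (R0 + 1) < X - Y).
  { apply (Rmult_lt_compat_r (R0 + 1)) in HN; [|lra]. replace ((X - Y) / (R0 + 1) * (R0 + 1)) with (X - Y) in HN by (field; lra). lra. }
  pose proof (pow_le c N (proj1 Hc)). nra.
Qed.

Lemma sys_bound (m n r : nat) (a : nat -> nat -> R) (C : nat -> nat -> nat -> nat -> R) (f : R -> R)
  (theta : Z -> R) (Hmono : forall k : Z, theta k < theta (k + 1)%Z) (omega : R) (p : nat) (Homega : 0 < omega)
  (Hper : forall k : Z, theta (k + 2 * Z.of_nat p)%Z = theta k + omega)
  (Mf Lf H0v : R) (HC3 : forall u, Rabs (f u) <= Mf) (HLf : 0 <= Lf)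
  (HC4 : forall u v, Rabs (f u - f v) <= Lf * Rabs (u - v))
  (K : nat -> nat -> R) (zeta zeta' : Z -> vec) (x y : R -> vec)
  (Hx : is_sol_N m n r a C f theta zeta x) (Hy : is_sol_N m n r a C f theta zeta' y)
  (Hxb : forall t, inT0 theta t -> vnorm m n (x t) <= H0v)
  (Hyb : forall t, inT0 theta t -> vnorm m n (y t) <= H0v)
  (HC : forall i j h l, is_cell m n i j -> is_cell m n h l -> 0 <= C i j h l)
  (HK : forall i j, is_cell m n i j -> 0 <= K i j)
  (HKu : forall i j, is_cell m n i j -> u_bound theta omega p (a i j) (K i j))
  (lm d A eta0 c Mc : R) (k1 kend : Z)
  (Hlm : forall i j, is_cell m n i j -> lm <= lambda_ij theta omega p (a i j))
  (Hlam : forall i j, is_cell m n i j -> 0 < lambda_ij theta omega p (a i j))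
  (Hd : 0 <= d) (HA : 0 <= A) (HKA : forall i j, is_cell m n i j -> K i j * (2 * H0v) <= A)
  (HKP : forall i j, is_cell m n i j -> K i j * ((Mf + H0v * Lf) * nbsum m n r i j (C i j)) <= d)
  (Hcoef0 : forall i j, is_cell m n i j -> 0 <= coefK theta omega p (a i j) (K i j))
  (Hc : forall i j, is_cell m n i j -> (Mf + H0v * Lf) * nbsum m n r i j (C i j) * coefK theta omega p (a i j) (K i j) <= c)
  (HMc : forall i j, is_cell m n i j -> coefK theta omega p (a i j) (K i j) <= Mc)
  (Hc01 : 0 <= c < 1) (HMc0 : 0 <= Mc)
  (HMf0 : 0 <= Mf) (HH0 : 0 <= H0v) (Heta : 0 <= eta0)
  (Hz : forall nu, (k1 <= nu <= kend)%Z -> vnorm m n (vsub (zeta nu) (zeta' nu)) <= eta0) :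
  forall k t, (k1 <= k <= kend)%Z -> theta (2*k-1)%Z <= t <= theta (2*k)%Z ->
    vnorm m n (vsub (x t) (y t)) <= Bf theta lm d A k1 k t + eta0 * Mc / (1 - c).
Proof.
  set (th := eta0 * Mc / (1 - c)).
  assert (Hth : 0 <= th) by (unfold th; apply Rmult_le_pos; [apply Rmult_le_pos; auto| left; apply Rinv_0_lt_compat; lra]).
  assert (Hthe : c * th + eta0 * Mc = th) by (unfold th; field; lra).
  set (Hind := fun rho => forall l tau, (k1 <= l <= kend)%Z -> theta (2*l-1)%Z <= tau <= theta (2*l)%Z ->
            vnorm m n (vsub (x tau) (y tau)) <= Bf theta lm d A k1 l tau + th + rho).
  assert (Hstep : forall rho, 0 <= rho -> Hind rho -> Hind (c * rho)).
  { intros rho Hrho HI l tau Hl Htau.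
    assert (HB : 0 <= Bf theta lm d A k1 l tau) by (apply Bf_nonneg; auto).
    apply vnorm_le. { pose proof (Rmult_le_pos c rho (proj1 Hc01) Hrho). lra. }
    intros i j Hij. unfold vsub.
    eapply Rle_trans.
    { apply (cell_bound m n r a C f theta Hmono omega p Homega Hper Mf Lf H0v HC3 HLf HC4 K zeta zeta' x y Hx Hy Hxb Hyb i j Hij
               (fun h l0 Hhl => HC i j h l0 Hij Hhl) (HK i j Hij) (HKu i j Hij) lm d A eta0 th rho k1 l tau (Hlm i j Hij) (Hlam i j Hij) Hd HA (HKA i j Hij) (HKP i j Hij)
               HMf0 HH0 Heta Hth Hrho ltac:(lia) Htau).
      - intros nu Hnu. apply Hz. lia.
      - intros l0 tau0 Hl0 Htau0. apply HI; auto. lia. }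
    pose proof (Hc i j Hij). pose proof (HMc i j Hij). pose proof (Hcoef0 i j Hij).
    set (P := (Mf + H0v * Lf) * nbsum m n r i j (C i j)) in *.
    set (cf := coefK theta omega p (a i j) (K i j)) in *.
    assert ((P * (th + rho) + eta0) * cf = P * cf * (th + rho) + eta0 * cf) by ring.
    assert (P * cf * (th + rho) <= c * (th + rho)) by (apply Rmult_le_compat_r; lra).
    assert (eta0 * cf <= eta0 * Mc) by (apply Rmult_le_compat_l; lra).
    nra. }
  assert (Hinit : Hind (2 * H0v)).
  { intros l tau Hl Htau.
    assert (HT : inT0 theta tau) by (exists l; auto).
    pose proof (vnorm_sub_le m n (x tau) (y tau)). pose proof (Hxb tau HT). pose proof (Hyb tau HT).
    pose proof (Bf_nonneg theta Hmono lm d A k1 l tau Hd HA). lra. }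
  assert (Hall : forall N, Hind (c ^ N * (2 * H0v))).
  { induction N. { simpl. rewrite Rmult_1_l. auto. }
    simpl. rewrite Rmult_assoc. apply Hstep; auto. apply Rmult_le_pos; [apply pow_le; lra| lra]. }
  intros k t Hk Ht.
  apply (limit_pow_le _ _ c (2 * H0v)); auto; [lra|].
  intros N. specialize (Hall N k t Hk Ht). fold th. lra.
Qed.


Lemma unif_cont m n (Lam : vec -> Prop) (F : vec -> vec) :
  seq_compact m n Lam -> cont_on m n Lam F ->
  forall eps, eps > 0 -> exists d, d > 0 /\ forall u v, Lam u -> Lam v -> vnorm m n (vsub u v) < d ->
     vnorm m n (vsub (F u) (F v)) < eps.
Proof.
  intros HLc HFc eps Heps. apply NNPP. intros Hn.
  assert (H : forall N : nat, exists uv : vec * vec, Lam (fst uv) /\ Lam (snd uv) /\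
             vnorm m n (vsub (fst uv) (snd uv)) < / INR (S N) /\ eps <= vnorm m n (vsub (F (fst uv)) (F (snd uv)))).
  { intros N. apply NNPP. intros Hn2. apply Hn. exists (/ INR (S N)). split.
    { apply Rinv_0_lt_compat, lt_0_INR; lia. }
    intros u v Hu Hv Huv. apply Rnot_le_lt. intros Hle. apply Hn2. exists (u, v). simpl. auto. }
  set (g := fun N => proj1_sig (constructive_indefinite_description _ (H N))).
  assert (Hg : forall N, Lam (fst (g N)) /\ Lam (snd (g N)) /\
             vnorm m n (vsub (fst (g N)) (snd (g N))) < / INR (S N) /\ eps <= vnorm m n (vsub (F (fst (g N))) (F (snd (g N))))).
  { intros N. unfold g. destruct (constructive_indefinite_description _ (H N)). simpl. auto. }
  destruct (HLc (fun N => fst (g N)) (fun N => proj1 (Hg N))) as [phi [w [Hphi [Hw Hconv]]]].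
  destruct (HFc w Hw (eps / 2) ltac:(lra)) as [d1 [Hd1 Hc]].
  destruct (Hconv (d1 / 2) ltac:(lra)) as [N1 HN1].
  destruct (INR_archimed (d1 / 2) 1 ltac:(lra)) as [N2 HN2].
  set (k := (N1 + N2)%nat).
  assert (Hphik : forall k, (k <= phi k)%nat).
  { induction k0; [lia|]. specialize (Hphi k0). lia. }
  specialize (HN1 k ltac:(unfold k; lia)).
  destruct (Hg (phi k)) as [Hu [Hv [Huv Hfar]]].
  assert (Hsmall : / INR (S (phi k)) < d1 / 2).
  { assert (INR N2 <= INR (S (phi k))) by (apply le_INR; specialize (Hphik k); unfold k in *; lia).
    assert (0 < INR (S (phi k))) by (apply lt_0_INR; lia).
    apply (Rmult_lt_reg_l (INR (S (phi k)))); auto. rewrite Rinv_r by lra. nra. }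
  assert (Hvw : vnorm m n (vsub (snd (g (phi k))) w) < d1).
  { pose proof (vnorm_triang m n (snd (g (phi k))) (fst (g (phi k))) w).
    rewrite vnorm_sym in Huv. lra. }
  pose proof (Hc _ Hu ltac:(lra)) as H1. pose proof (Hc _ Hv Hvw) as H2.
  pose proof (vnorm_triang m n (F (fst (g (phi k)))) (F w) (F (snd (g (phi k))))).
  rewrite (vnorm_sym m n (F w)) in H0. lra.
Qed.

Lemma iter_close m n (Lam : vec -> Prop) (F : vec -> vec) :
  seq_compact m n Lam -> cont_on m n Lam F -> (forall v, Lam v -> Lam (F v)) ->
  forall J eps, eps > 0 -> exists d, d > 0 /\ forall u v, Lam u -> Lam v -> vnorm m n (vsub u v) < d ->
     forall j, (j <= J)%nat -> vnorm m n (vsub (Nat.iter j F u) (Nat.iter j F v)) < eps.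
Proof.
  intros HLc HFc HFL. induction J; intros eps Heps.
  - exists eps. split; auto. intros u v Hu Hv Huv j Hj. replace j with 0%nat by lia. simpl. auto.
  - destruct (unif_cont m n Lam F HLc HFc eps Heps) as [d1 [Hd1 Huc]].
    destruct (IHJ (Rmin d1 eps) ltac:(apply Rmin_pos; lra)) as [d [Hd Hcl]].
    exists d. split; auto. intros u v Hu Hv Huv j Hj.
    assert (Hit : forall j u, Lam u -> Lam (Nat.iter j F u)) by (induction j0; simpl; auto).
    destruct (Nat.eq_dec j (S J)) as [E|E].
    + subst j. simpl. apply Huc; auto. eapply Rlt_le_trans; [apply (Hcl u v Hu Hv Huv J (le_n _))| apply Rmin_l].
    + eapply Rlt_le_trans; [apply (Hcl u v Hu Hv Huv j ltac:(lia))| apply Rmin_r].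
Qed.

Lemma orbit (Lam : vec -> Prop) (F : vec -> vec) zeta : in_Theta Lam F zeta ->
  forall k1 j, zeta (k1 + Z.of_nat j)%Z = Nat.iter j F (zeta k1).
Proof.
  intros H k1 j. induction j.
  - simpl. rewrite Z.add_0_r. auto.
  - change (Nat.iter (S j) F (zeta k1)) with (F (Nat.iter j F (zeta k1))). rewrite <- IHj.
    replace (k1 + Z.of_nat (S j))%Z with (k1 + Z.of_nat j + 1)%Z by lia. apply (H (k1 + Z.of_nat j)%Z).
Qed.

Lemma theta_strict theta (Hmono : forall k : Z, theta k < theta (k + 1)%Z) a b : (a < b)%Z -> theta a < theta b.
Proof.
  intros H. replace b with (a + 1 + Z.of_nat (Z.to_nat (b - a - 1)))%Z by lia.
  induction (Z.to_nat (b - a - 1)).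
  - rewrite Z.add_0_r. auto.
  - replace (a + 1 + Z.of_nat (S n))%Z with (a + 1 + Z.of_nat n + 1)%Z by lia.
    pose proof (Hmono (a + 1 + Z.of_nat n)%Z). lra.
Qed.


Lemma prodn_le_pow g b k : (forall i, (i < k)%nat -> 0 <= g i <= b) -> prodn g k <= b ^ k.
Proof.
  induction k; intros H; simpl; [lra|].
  assert (prodn g k <= b ^ k) by (apply IHk; intros; apply H; lia).
  assert (0 <= prodn g k).
  { clear IHk H0. induction k; simpl; [lra|]. apply Rmult_le_pos; [apply IHk; intros; apply H; lia| apply H; lia]. }
  destruct (H k (Nat.lt_succ_diag_r k)). rewrite Rmult_comm. apply Rmult_le_compat; auto.
Qed.

Lemma exp_le_mono x y : x <= y -> exp x <= exp y.
Proof. intros [H|H]; [left; apply exp_increasing; auto| subst; lra]. Qed.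

Lemma B_decay theta (Hmono : forall k : Z, theta k < theta (k + 1)%Z) omega p (Homega : 0 < omega)
  (Hper : forall k : Z, theta (k + 2 * Z.of_nat p)%Z = theta k + omega) lm d A k1 k t M :
  0 <= d -> 0 <= A -> (k1 + Z.of_nat (p * M) <= k)%Z -> theta (2*k-1)%Z <= t <= theta (2*k)%Z ->
  - lm + d + INR p / psi_omega theta omega p * ln (1 + delta_max theta p * d) < 0 ->
  Bf theta lm d A k1 k t <= A * exp (INR p * ln (1 + delta_max theta p * d))
     * exp ((- lm + d + INR p / psi_omega theta omega p * ln (1 + delta_max theta p * d)) * (psi_omega theta omega p * INR M)).
Proof.
  intros Hd HA Hk Ht Hg.
  pose proof (p_pos _ _ _ Homega Hper) as Hp.
  pose proof (Psi_pos _ _ _ Homega Hmono Hper) as HPsi.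
  set (Psi := psi_omega theta omega p) in *.
  set (dm := delta_max theta p) in *.
  assert (Hdm : 0 <= dm) by (unfold dm; pose proof (delta_le_max theta omega p Homega Hper 0); pose proof (delta_pos theta Hmono 0); lra).
  set (Lg := ln (1 + dm * d)) in *.
  assert (HLg : 0 <= Lg).
  { unfold Lg. rewrite <- ln_1. assert (0 <= dm * d) by nra. destruct H as [H|H].
    - left; apply ln_increasing; lra.
    - rewrite <- H, Rplus_0_r. lra. }
  set (gam := - lm + d + INR p / Psi * Lg) in *.
  set (s0 := s_seq theta (k1 - 1)).
  set (X := psi theta k t - s0).
  set (nn := Z.to_nat (k - k1)).
  assert (Hgap : Psi * INR (nn / p) <= X).
  { pose proof (sq_gap theta omega p Homega Hmono Hper (k-1) nn).
    replace (k - 1 - Z.of_nat nn)%Z with (k1 - 1)%Z in H by (unfold nn; lia).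
    assert (s_seq theta (k-1) <= psi theta k t) by (rewrite <- psi_left; unfold psi; lra).
    unfold X, s0. fold Psi in H. lra. }
  assert (HnM : (M <= nn / p)%nat).
  { apply Nat.div_le_lower_bound; [lia|]. unfold nn. lia. }
  assert (HX : Psi * INR M <= X).
  { apply le_INR in HnM. pose proof (Rmult_le_compat_l Psi _ _ (Rlt_le _ _ HPsi) HnM). lra. }
  assert (Hn : INR nn <= INR p * (X / Psi) + INR p).
  { pose proof (Nat.div_mod nn p ltac:(lia)). pose proof (Nat.mod_upper_bound nn p ltac:(lia)).
    assert (INR nn = INR p * INR (nn / p) + INR (nn mod p)).
    { rewrite <- mult_INR, <- plus_INR. f_equal. lia. }
    assert (INR (nn mod p) <= INR p) by (apply le_INR; lia).
    assert (INR (nn / p) <= X / Psi).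
    { apply (Rmult_le_reg_l Psi); auto. replace (Psi * (X / Psi)) with X by (field; lra). lra. }
    pose proof (pos_INR p). nra. }
  assert (Hprod : prodn (fun i => 1 + delta theta (k1 + Z.of_nat i) * d) nn <= exp (INR nn * Lg)).
  { rewrite exp_INR_mult. unfold Lg. rewrite exp_ln by nra.
    apply prodn_le_pow. intros i Hi. pose proof (delta_pos theta Hmono (k1 + Z.of_nat i)).
    pose proof (delta_le_max theta omega p Homega Hper (k1 + Z.of_nat i)). fold dm in H0. split; nra. }
  assert (HB : Bf theta lm d A k1 k t = A * exp ((d - lm) * X) * prodn (fun i => 1 + delta theta (k1 + Z.of_nat i) * d) nn).
  { unfold Bf, Vf. fold s0. fold nn. replace (psi theta k t - s0) with X by auto.
    replace ((d - lm) * X) with (- lm * psi theta k t + lm * s0 + d * X) by (unfold X; ring).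
    rewrite !exp_plus. ring. }
  rewrite HB.
  eapply Rle_trans. { apply Rmult_le_compat_l; [apply Rmult_le_pos; [auto| left; apply exp_pos]| exact Hprod]. }
  rewrite Rmult_assoc, <- exp_plus. rewrite Rmult_assoc, <- exp_plus.
  apply Rmult_le_compat_l; auto. apply exp_le_mono.
  assert (Lg * INR nn <= Lg * (INR p * (X / Psi) + INR p)) by (apply Rmult_le_compat_l; auto).
  assert (gam * X <= gam * (Psi * INR M)) by (apply Rmult_le_compat_neg_l; lra).
  assert (E : (d - lm) * X + Lg * (INR p * (X / Psi) + INR p) = gam * X + INR p * Lg) by (unfold gam; field; lra).
  nra.
Qed.


Theorem lemma3
  (m n r : nat) (Hm : (1 <= m)%nat) (Hn : (1 <= n)%nat)
  (a : nat -> nat -> R) (Ha : forall i j, is_cell m n i j -> 0 < a i j)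
  (C : nat -> nat -> nat -> nat -> R)
  (HC : forall i j h l, is_cell m n i j -> is_cell m n h l -> 0 <= C i j h l)
  (f : R -> R) (Hfc : continuity f)
  (theta : Z -> R) (Hmono : forall k : Z, theta k < theta (k + 1)%Z)
  (Hneg : theta (-1)%Z < 0) (Hpos : 0 < theta 0%Z)
  (omega : R) (Homega : 0 < omega) (p : nat)
  (Hper : forall k : Z, theta (k + 2 * Z.of_nat p)%Z = theta k + omega)
  (Lam : vec -> Prop) (HLc : seq_compact m n Lam)
  (F : vec -> vec) (HFL : forall v, Lam v -> Lam (F v)) (HFc : cont_on m n Lam F)
  (MF : R) (HMF1 : exists v, Lam v /\ vnorm m n (F v) = MF)
  (HMF2 : forall v, Lam v -> vnorm m n (F v) <= MF)
  (* (C1) *)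
  (HC1 : forall (i j : nat) (k : Z), is_cell m n i j -> delta theta k * a i j <> 1)
  (* (C2) *)
  (HC2 : lambda_min m n theta omega p a > 0)
  (* (C3) *)
  (Mf : R) (HMf : Mf > 0) (HC3 : forall u, Rabs (f u) <= Mf)
  (* (C4) *)
  (Lf : R) (HLf : Lf > 0) (HC4 : forall u v, Rabs (f u - f v) <= Lf * Rabs (u - v))
  (* the constants K_ij *)
  (K : nat -> nat -> R) (HK : forall i j, is_cell m n i j -> 0 < K i j)
  (HKu : forall i j, is_cell m n i j -> u_bound theta omega p (a i j) (K i j))
  (* denominator of H0 positive (implicit in the definition of H0) *)
  (Hden : Mf * cbar m n r theta omega p a K C < 1)
  (* (C5) *)
  (HC5 : (Mf + H0 m n r theta omega p a K C MF Mf * Lf)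
           * cbar m n r theta omega p a K C < 1)
  (* (C6) *)
  (HC6 : - lambda_min m n theta omega p a + dbar m n r theta omega p a K C MF Mf Lf
         + INR p / psi_omega theta omega p
           * ln (1 + delta_max theta p * dbar m n r theta omega p a K C MF Mf Lf) < 0)
  (zeta zeta' : Z -> vec) (Hz : in_Theta Lam F zeta) (Hz' : in_Theta Lam F zeta')
  (Hlim : liminf_eq (fun k : nat => vnorm m n (vsub (zeta (Z.of_nat k)) (zeta' (Z.of_nat k)))) 0)
  (* varphi_zeta, varphi_zeta': the (unique) solutions of (N_zeta), (N_zeta')
     on T_0 bounded by H0 *)
  (x y : R -> vec)
  (Hx : is_sol_N m n r a C f theta zeta x)
  (Hxb : forall t, inT0 theta t -> vnorm m n (x t) <= H0 m n r theta omega p a K C MF Mf)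
  (Hy : is_sol_N m n r a C f theta zeta' y)
  (Hyb : forall t, inT0 theta t -> vnorm m n (y t) <= H0 m n r theta omega p a K C MF Mf) :
  forall eps : R, eps > 0 -> forall E : nat, exists k0 : Z,
    forall t, theta (2 * k0 - 1)%Z <= t <= theta (2 * (k0 + Z.of_nat E))%Z ->
      inT0 theta t -> vnorm m n (vsub (x t) (y t)) < eps.
Proof.
  intros eps Heps E.
  pose proof (p_pos _ _ _ Homega Hper) as Hp.
  pose proof (Psi_pos _ _ _ Homega Hmono Hper) as HPsi.
  set (Psi := psi_omega theta omega p) in *.
  set (lm := lambda_min m n theta omega p a) in *.
  assert (Hlm : forall i j, is_cell m n i j -> lm <= lambda_ij theta omega p (a i j)).
  { intros i j H. apply (cellmin_le m n (fun i j => lambda_ij theta omega p (a i j)) i j H). }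
  assert (Hlam : forall i j, is_cell m n i j -> 0 < lambda_ij theta omega p (a i j)).
  { intros i j H. pose proof (Hlm i j H). lra. }
  assert (H11 : is_cell m n 1 1) by (unfold is_cell; lia).
  set (dm := delta_max theta p) in *.
  assert (Hdm : 0 <= dm) by (unfold dm; pose proof (delta_le_max theta omega p Homega Hper 0); pose proof (delta_pos theta Hmono 0); lra).
  assert (Hcoef : forall i j, is_cell m n i j -> 0 < coefK theta omega p (a i j) (K i j)).
  { intros i j H. unfold coefK. fold Psi. fold dm.
    pose proof (Hlam i j H). pose proof (HK i j H).
    assert (0 < 1 - exp (- lambda_ij theta omega p (a i j) * Psi)).
    { assert (exp (- lambda_ij theta omega p (a i j) * Psi) < 1) by (rewrite <- exp_0; apply exp_increasing; nra). lra. }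
    assert (0 < K i j / lambda_ij theta omega p (a i j)) by (apply Rdiv_lt_0_compat; auto).
    assert (0 <= INR p * dm * K i j / (1 - exp (- lambda_ij theta omega p (a i j) * Psi))).
    { apply Rmult_le_pos; [apply Rmult_le_pos; [apply Rmult_le_pos; [apply pos_INR| auto]| lra]| left; apply Rinv_0_lt_compat; auto]. }
    lra. }
  assert (HS : forall i j, is_cell m n i j -> 0 <= nbsum m n r i j (C i j)).
  { intros i j H. apply nbsum_nonneg. intros; apply HC; auto. }
  set (Mc := cellmax m n (fun i j => coefK theta omega p (a i j) (K i j))).
  assert (HMc : forall i j, is_cell m n i j -> coefK theta omega p (a i j) (K i j) <= Mc).
  { intros i j H. apply (cellmax_ge m n (fun i j => coefK theta omega p (a i j) (K i j)) i j H). }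
  assert (HMc0 : 0 < Mc) by (pose proof (HMc 1%nat 1%nat H11); pose proof (Hcoef 1%nat 1%nat H11); lra).
  set (cb := cbar m n r theta omega p a K C) in *.
  assert (Hcb : forall i j, is_cell m n i j -> coefK theta omega p (a i j) (K i j) * nbsum m n r i j (C i j) <= cb).
  { intros i j H. apply (cellmax_ge m n (fun i j => coefK theta omega p (a i j) (K i j) * nbsum m n r i j (C i j)) i j H). }
  assert (Hcb0 : 0 <= cb).
  { pose proof (Hcb 1%nat 1%nat H11). pose proof (Hcoef 1%nat 1%nat H11). pose proof (HS 1%nat 1%nat H11). nra. }
  assert (HMF0 : 0 <= MF) by (destruct HMF1 as [v [_ Hv]]; rewrite <- Hv; apply vnorm_pos).
  set (H0v := H0 m n r theta omega p a K C MF Mf) in *.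
  assert (HH0 : 0 <= H0v).
  { unfold H0v, H0. fold cb. fold Mc. apply Rmult_le_pos; [| lra].
    apply Rmult_le_pos; auto. left; apply Rinv_0_lt_compat; lra. }
  set (D := Mf + H0v * Lf) in *.
  assert (HD : 0 <= D) by (unfold D; nra).
  set (c := D * cb).
  assert (Hc01 : 0 <= c < 1) by (unfold c; split; [nra| auto]).
  set (d := dbar m n r theta omega p a K C MF Mf Lf) in *.
  assert (HKS : forall i j, is_cell m n i j -> K i j * nbsum m n r i j (C i j) <= cellmax m n (fun i j => K i j * nbsum m n r i j (C i j))).
  { intros i j H. apply (cellmax_ge m n (fun i j => K i j * nbsum m n r i j (C i j)) i j H). }
  assert (Hd0 : 0 <= d).
  { unfold d, dbar. fold H0v. fold D. apply Rmult_le_pos; auto.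
    pose proof (HKS 1%nat 1%nat H11). pose proof (HK 1%nat 1%nat H11). pose proof (HS 1%nat 1%nat H11). nra. }
  set (Kmax := cellmax m n K).
  assert (HKmax : forall i j, is_cell m n i j -> K i j <= Kmax) by (intros; apply cellmax_ge; auto).
  set (A := Kmax * (2 * H0v)).
  assert (HA : 0 <= A) by (unfold A; pose proof (HKmax 1%nat 1%nat H11); pose proof (HK 1%nat 1%nat H11); nra).
  set (eta0 := eps * (1 - c) / (4 * (Mc + 1))).
  assert (Heta : 0 < eta0) by (unfold eta0; apply Rdiv_lt_0_compat; nra).
  assert (Hth : eta0 * Mc / (1 - c) < eps / 4).
  { unfold eta0. replace (eps * (1 - c) / (4 * (Mc + 1)) * Mc / (1 - c)) with (eps / 4 * (Mc / (Mc + 1))) by (field; lra).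
    assert (Mc / (Mc + 1) < 1) by (apply (Rmult_lt_reg_r (Mc + 1)); [lra|]; unfold Rdiv; rewrite Rmult_assoc, Rinv_l by lra; lra).
    nra. }
  set (Lg := ln (1 + dm * d)) in *.
  set (gam := - lm + d + INR p / Psi * Lg) in *.
  set (Cst := A * exp (INR p * Lg)).
  assert (HCst : 0 <= Cst) by (unfold Cst; apply Rmult_le_pos; auto; left; apply exp_pos).
  destruct (INR_archimed ((- gam) * Psi * (eps / 2)) Cst ltac:(apply Rmult_lt_0_compat; [nra| lra])) as [M HM].
  assert (HdecM : Cst * exp (gam * (Psi * INR M)) < eps / 2).
  { set (yv := - gam * Psi * INR M).
    assert (Hy0 : 0 <= yv) by (unfold yv; pose proof (pos_INR M); apply Rmult_le_pos; nra).
    pose proof (exp_ineq1_le yv).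
    assert (Ee : exp (gam * (Psi * INR M)) * exp yv = 1) by (rewrite <- exp_plus; unfold yv; rewrite <- exp_0; f_equal; ring).
    assert (Cst < (1 + yv) * (eps / 2)) by (unfold yv; nra).
    pose proof (exp_pos (gam * (Psi * INR M))). nra. }
  set (J := (p * M + E)%nat).
  destruct (iter_close m n Lam F HLc HFc HFL J eta0 Heta) as [dl [Hdl Hcl]].
  destruct (Hlim dl Hdl) as [_ Hl2]. destruct (Hl2 0%nat) as [kk [_ Hkk]]. rewrite Rplus_0_l in Hkk.
  set (k1 := Z.of_nat kk).
  set (kend := (k1 + Z.of_nat J)%Z).
  assert (Hzz : forall nu, (k1 <= nu <= kend)%Z -> vnorm m n (vsub (zeta nu) (zeta' nu)) <= eta0).
  { intros nu Hnu. replace nu with (k1 + Z.of_nat (Z.to_nat (nu - k1)))%Z by lia.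
    rewrite (orbit Lam F zeta Hz), (orbit Lam F zeta' Hz'). left.
    apply Hcl; [apply (Hz k1)| apply (Hz' k1)| exact Hkk| unfold kend in Hnu; lia]. }
  exists (k1 + Z.of_nat (p * M))%Z.
  intros t Ht [k' Hk'].
  assert (Hk'lo : (k1 + Z.of_nat (p * M) <= k')%Z).
  { destruct (Z_le_gt_dec (k1 + Z.of_nat (p * M)) k') as [H|H]; auto. exfalso.
    pose proof (theta_strict theta Hmono (2*k')%Z (2 * (k1 + Z.of_nat (p * M)) - 1)%Z ltac:(lia)). lra. }
  assert (Hk'hi : (k' <= k1 + Z.of_nat (p * M) + Z.of_nat E)%Z).
  { destruct (Z_le_gt_dec k' (k1 + Z.of_nat (p * M) + Z.of_nat E)) as [H|H]; auto. exfalso.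
    pose proof (theta_strict theta Hmono (2 * (k1 + Z.of_nat (p * M) + Z.of_nat E))%Z (2*k'-1)%Z ltac:(lia)). lra. }
  pose proof (sys_bound m n r a C f theta Hmono omega p Homega Hper Mf Lf H0v HC3 (Rlt_le _ _ HLf) HC4 K zeta zeta' x y
     Hx Hy Hxb Hyb HC (fun i j H => Rlt_le _ _ (HK i j H)) HKu lm d A eta0 c Mc k1 kend Hlm Hlam Hd0 HA) as Hsb.
  specialize (Hsb ltac:(intros i j H; unfold A; pose proof (HKmax i j H); nra)).
  specialize (Hsb ltac:(intros i j H; fold D; pose proof (HKS i j H);
      unfold d, dbar; fold H0v; fold D;
      replace (K i j * (D * nbsum m n r i j (C i j))) with (D * (K i j * nbsum m n r i j (C i j))) by ring;
      apply Rmult_le_compat_l; auto)).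
  specialize (Hsb ltac:(intros i j H; left; apply Hcoef; auto)).
  specialize (Hsb ltac:(intros i j H; fold D; unfold c; pose proof (Hcb i j H);
      replace (D * nbsum m n r i j (C i j) * coefK theta omega p (a i j) (K i j)) with (D * (coefK theta omega p (a i j) (K i j) * nbsum m n r i j (C i j))) by ring;
      apply Rmult_le_compat_l; auto)).
  specialize (Hsb HMc Hc01 (Rlt_le _ _ HMc0) (Rlt_le _ _ HMf) HH0 (Rlt_le _ _ Heta) Hzz k' t ltac:(unfold kend, J; lia) Hk').
  pose proof (B_decay theta Hmono omega p Homega Hper lm d A k1 k' t M Hd0 HA Hk'lo Hk' HC6) as Hbd.
  fold Psi dm Lg gam in Hbd. fold Cst in Hbd.
  lra.
Qed.
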